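(* Let $k\ge4$ be an integer and $\eta\in[\eta_{k+1},\eta_k)$. Then $\mathrm{co}(V)=\mathrm{co}(V_k)$, where $V=\{b_0\}\cup\{z_j:j\ge0\}\cup\{w_j:j\ge1\}$ and $V_k=\{b_0,z_0,z_1,\dots,z_k,w_1,\dots,w_k\}$.
   Context: For $\eta\in(0,\pi/3)$ let $a=\frac{e^{-i\eta}}{2\cos\eta}$, $c=\frac{1}{1-|a|^4}$, and for integers $j\ge0$ put $z_j=ca^{j+1}$, $w_j=1-c|a|^2a^j$, $b_0=a+c|a|^4$. For integers $k\ge1$ let $\Phi_k(\eta)=(1-|a|^4)\sin((k-1)\eta)-|a|^3\sin((k-2)\eta)+|a|^k\sin\eta$; for each $k\ge4$, $\Phi_k$ has a unique zero in $(\pi/k,\pi/(k-1))$, denoted $\eta_k$. $\mathrm{co}$ denotes convex hull. *)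

(* Defs.v *)
From Stdlib Require Import Reals List.
From Coquelicot Require Import Coquelicot.
Open Scope R_scope.

Definition cexpi (t : R) : C := (cos t, sin t).

Definition a_of (eta : R) : C := Cmult (cexpi (- eta)) (RtoC (/ (2 * cos eta))).
Definition c_of (eta : R) : R := / (1 - Cmod (a_of eta) ^ 4).
Definition z_of (eta : R) (j : nat) : C :=
  Cmult (RtoC (c_of eta)) (Cpow (a_of eta) (S j)).
Definition w_of (eta : R) (j : nat) : C :=
  Cminus (RtoC 1)
    (Cmult (RtoC (c_of eta * Cmod (a_of eta) ^ 2)) (Cpow (a_of eta) j)).
Definition b0_of (eta : R) : C :=
  Cplus (a_of eta) (RtoC (c_of eta * Cmod (a_of eta) ^ 4)).

Definition Phi (k : nat) (eta : R) : R :=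
  let A := Cmod (a_of eta) in
  (1 - A ^ 4) * sin ((INR k - 1) * eta) - A ^ 3 * sin ((INR k - 2) * eta)
  + A ^ k * sin eta.

(* eta_k characterization: a zero of Phi_k in (pi/k, pi/(k-1)) (unique by the paper). *)
Definition is_eta_k (k : nat) (e : R) : Prop :=
  PI / INR k < e < PI / (INR k - 1) /\ Phi k e = 0.

Definition conv_hull (S : C -> Prop) : C -> Prop :=
  fun x => exists l : list (R * C),
    List.Forall (fun p => 0 <= fst p /\ S (snd p)) l /\
    fold_right (fun p s => fst p + s) 0 l = 1 /\
    x = fold_right (fun p s => Cplus (Cmult (RtoC (fst p)) (snd p)) s) (RtoC 0) l.

Definition V_set (eta : R) : C -> Prop :=
  fun x => x = b0_of eta \/ (exists j : nat, x = z_of eta j)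
           \/ (exists j : nat, (1 <= j)%nat /\ x = w_of eta j).

Definition Vk_set (k : nat) (eta : R) : C -> Prop :=
  fun x => x = b0_of eta \/ (exists j : nat, (j <= k)%nat /\ x = z_of eta j)
           \/ (exists j : nat, (1 <= j <= k)%nat /\ x = w_of eta j).

(* Main.v *)
Require Import Defs.
From Stdlib Require Import Reals List Lra Lia Psatz.
From Coquelicot Require Import Coquelicot.
Open Scope R_scope.

Definition wsum (l : list (R*C)) : R := fold_right (fun p s => fst p + s) 0 l.
Definition comb (l : list (R*C)) : C :=
  fold_right (fun p s => Cplus (Cmult (RtoC (fst p)) (snd p)) s) (RtoC 0) l.

Lemma wsum_app l1 l2 : wsum (l1 ++ l2) = wsum l1 + wsum l2.
Proof. induction l1 as [|p l IH]; simpl; [lra| rewrite IH; lra]. Qed.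

Lemma comb_app l1 l2 : comb (l1 ++ l2) = Cplus (comb l1) (comb l2).
Proof.
  induction l1 as [|p l IH]; simpl.
  - destruct (comb l2) as [x y]; unfold Cplus, RtoC; simpl; f_equal; ring.
  - rewrite IH. destruct (comb l) as [x y], (comb l2) as [x' y'], p as [w [u v]].
    unfold Cplus, Cmult, RtoC; simpl; f_equal; ring.
Qed.

Definition scl (w : R) (l : list (R*C)) := map (fun p => (w * fst p, snd p)) l.

Lemma wsum_scl w l : wsum (scl w l) = w * wsum l.
Proof. induction l as [|p l IH]; simpl; [ring| rewrite IH; ring]. Qed.

Lemma comb_scl w l : comb (scl w l) = Cmult (RtoC w) (comb l).
Proof.
  induction l as [|p l IH]; simpl.
  - unfold Cmult, RtoC; simpl; f_equal; ring.
  - rewrite IH. destruct (comb l) as [x y], p as [w' [u v]].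
    unfold Cplus, Cmult, RtoC; simpl; f_equal; ring.
Qed.

Lemma hull_general (S : C -> Prop) (l : list (R*C)) :
  List.Forall (fun p => 0 <= fst p /\ conv_hull S (snd p)) l ->
  exists l', List.Forall (fun p => 0 <= fst p /\ S (snd p)) l' /\ wsum l' = wsum l /\ comb l' = comb l.
Proof.
  induction l as [|[w x] l IH]; intros H.
  - exists nil. simpl. auto.
  - apply List.Forall_cons_iff in H as [[Hw Hx] Hl]. simpl in Hw, Hx.
    destruct (IH Hl) as [l' [H1 [H2 H3]]].
    destruct Hx as [lx [Fx [Sx Cx]]].
    exists (scl w lx ++ l'). split; [|split].
    + apply List.Forall_app. split; auto.
      unfold scl. apply List.Forall_map. eapply List.Forall_impl; [|exact Fx].
      intros [u v] [Hu Hv]; simpl in *. split; auto. apply Rmult_le_pos; auto.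
    + rewrite wsum_app, wsum_scl. fold (wsum lx) in Sx. rewrite Sx, H2. simpl. ring.
    + rewrite comb_app, comb_scl, H3. fold (comb lx) in Cx. rewrite <- Cx. simpl. reflexivity.
Qed.

Lemma hull_hull (S : C -> Prop) x : conv_hull (conv_hull S) x -> conv_hull S x.
Proof.
  intros [l [F [Sm Cm]]].
  destruct (hull_general S l F) as [l' [F' [S' C']]].
  exists l'. split; auto. split.
  - fold (wsum l'). rewrite S'. exact Sm.
  - fold (comb l'). rewrite C'. exact Cm.
Qed.

Lemma hull_sub (S : C -> Prop) x : S x -> conv_hull S x.
Proof.
  intros Hx. exists ((1, x) :: nil). split; [|split].
  - constructor; [simpl; split; [lra|auto]|constructor].
  - simpl. ring.
  - simpl. destruct x as [u v]. unfold Cplus, Cmult, RtoC; simpl; f_equal; ring.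
Qed.

Lemma hull_mono (S T : C -> Prop) x : (forall y, S y -> T y) -> conv_hull S x -> conv_hull T x.
Proof.
  intros HST [l [F [Sm Cm]]]. exists l. split; auto.
  eapply List.Forall_impl; [|exact F]. intros p [H1 H2]; auto.
Qed.

Lemma hull_comb3 (S : C -> Prop) (u v w : C) (l1 l2 l3 : R) :
  conv_hull S u -> conv_hull S v -> conv_hull S w ->
  0 <= l1 -> 0 <= l2 -> 0 <= l3 -> l1 + l2 + l3 = 1 ->
  conv_hull S (Cplus (Cmult (RtoC l1) u) (Cplus (Cmult (RtoC l2) v) (Cmult (RtoC l3) w))).
Proof.
  intros Hu Hv Hw H1 H2 H3 Hs. apply hull_hull.
  exists ((l1,u)::(l2,v)::(l3,w)::nil). split; [|split].
  - constructor; [simpl; split; assumption|]. constructor; [simpl; split; assumption|].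
    constructor; [simpl; split; assumption|]. constructor.
  - simpl. lra.
  - simpl. destruct u as [u1 u2], v as [v1 v2], w as [w1 w2].
    unfold Cplus, Cmult, RtoC; simpl; f_equal; ring.
Qed.

Definition cross (u v w : C) : R :=
  (fst v - fst u) * (snd w - snd u) - (snd v - snd u) * (fst w - fst u).

Lemma tri_hull (S : C -> Prop) (u v w x : C) :
  conv_hull S u -> conv_hull S v -> conv_hull S w ->
  ((0 <= cross x v w /\ 0 <= cross u x w /\ 0 <= cross u v x /\ 0 < cross x v w + cross u x w + cross u v x) \/
   (cross x v w <= 0 /\ cross u x w <= 0 /\ cross u v x <= 0 /\ cross x v w + cross u x w + cross u v x < 0)) ->
  conv_hull S x.
Proof.
  intros Hu Hv Hw H.
  assert (Ex : forall D, D = cross x v w + cross u x w + cross u v x -> D <> 0 ->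
     x = Cplus (Cmult (RtoC (cross x v w/D)) u) (Cplus (Cmult (RtoC (cross u x w/D)) v) (Cmult (RtoC (cross u v x/D)) w))).
  { intros D HD HD0. subst D.
    destruct u as [u1 u2], v as [v1 v2], w as [w1 w2], x as [x1 x2].
    unfold Cplus, Cmult, RtoC, cross in *; simpl in *. f_equal; field; exact HD0. }
  destruct H as [[H1 [H2 [H3 H4]]]|[H1 [H2 [H3 H4]]]].
  - rewrite (Ex _ eq_refl) by lra. apply hull_comb3; auto.
    + apply Rmult_le_pos; [lra|left; apply Rinv_0_lt_compat; lra].
    + apply Rmult_le_pos; [lra|left; apply Rinv_0_lt_compat; lra].
    + apply Rmult_le_pos; [lra|left; apply Rinv_0_lt_compat; lra].
    + field. lra.
  - rewrite (Ex _ eq_refl) by lra. apply hull_comb3; auto.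
    + unfold Rdiv. rewrite <- (Ropp_involutive (cross x v w)), <- (Ropp_involutive (_ + _ + _)).
      rewrite Rinv_opp, Rmult_opp_opp. apply Rmult_le_pos; [lra|left; apply Rinv_0_lt_compat; lra].
    + unfold Rdiv. rewrite <- (Ropp_involutive (cross u x w)), <- (Ropp_involutive (_ + _ + _)).
      rewrite Rinv_opp, Rmult_opp_opp. apply Rmult_le_pos; [lra|left; apply Rinv_0_lt_compat; lra].
    + unfold Rdiv. rewrite <- (Ropp_involutive (cross u v x)), <- (Ropp_involutive (_ + _ + _)).
      rewrite Rinv_opp, Rmult_opp_opp. apply Rmult_le_pos; [lra|left; apply Rinv_0_lt_compat; lra].
    + field. lra.
Qed.

Lemma tri_coef (u v w x : C) :
  ((0 <= cross x v w /\ 0 <= cross u x w /\ 0 <= cross u v x /\ 0 < cross x v w + cross u x w + cross u v x) \/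
   (cross x v w <= 0 /\ cross u x w <= 0 /\ cross u v x <= 0 /\ cross x v w + cross u x w + cross u v x < 0)) ->
  exists l1 l2 l3, 0 <= l1 /\ 0 <= l2 /\ 0 <= l3 /\ l1 + l2 + l3 = 1 /\
    x = Cplus (Cmult (RtoC l1) u) (Cplus (Cmult (RtoC l2) v) (Cmult (RtoC l3) w)).
Proof.
  intros H.
  assert (Ex : forall D, D = cross x v w + cross u x w + cross u v x -> D <> 0 ->
     x = Cplus (Cmult (RtoC (cross x v w/D)) u) (Cplus (Cmult (RtoC (cross u x w/D)) v) (Cmult (RtoC (cross u v x/D)) w))).
  { intros D HD HD0. subst D.
    destruct u as [u1 u2], v as [v1 v2], w as [w1 w2], x as [x1 x2].
    unfold Cplus, Cmult, RtoC, cross in *; simpl in *. f_equal; field; exact HD0. }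
  set (D := cross x v w + cross u x w + cross u v x).
  exists (cross x v w / D), (cross u x w / D), (cross u v x / D).
  destruct H as [[H1 [H2 [H3 H4]]]|[H1 [H2 [H3 H4]]]].
  - repeat split.
    + apply Rmult_le_pos; [lra|left; apply Rinv_0_lt_compat; unfold D; lra].
    + apply Rmult_le_pos; [lra|left; apply Rinv_0_lt_compat; unfold D; lra].
    + apply Rmult_le_pos; [lra|left; apply Rinv_0_lt_compat; unfold D; lra].
    + unfold D. field. lra.
    + apply Ex; [reflexivity| unfold D; lra].
  - repeat split.
    + unfold Rdiv. rewrite <- (Ropp_involutive (cross x v w)), <- (Ropp_involutive D).
      rewrite Rinv_opp, Rmult_opp_opp. apply Rmult_le_pos; [lra|left; apply Rinv_0_lt_compat; unfold D; lra].
    + unfold Rdiv. rewrite <- (Ropp_involutive (cross u x w)), <- (Ropp_involutive D).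
      rewrite Rinv_opp, Rmult_opp_opp. apply Rmult_le_pos; [lra|left; apply Rinv_0_lt_compat; unfold D; lra].
    + unfold Rdiv. rewrite <- (Ropp_involutive (cross u v x)), <- (Ropp_involutive D).
      rewrite Rinv_opp, Rmult_opp_opp. apply Rmult_le_pos; [lra|left; apply Rinv_0_lt_compat; unfold D; lra].
    + unfold D. field. lra.
    + apply Ex; [reflexivity| unfold D; lra].
Qed.

Lemma hull_comb4 (S : C -> Prop) (u v w x : C) (l1 l2 l3 l4 : R) :
  conv_hull S u -> conv_hull S v -> conv_hull S w -> conv_hull S x ->
  0 <= l1 -> 0 <= l2 -> 0 <= l3 -> 0 <= l4 -> l1 + l2 + l3 + l4 = 1 ->
  conv_hull S (Cplus (Cmult (RtoC l1) u) (Cplus (Cmult (RtoC l2) v) (Cplus (Cmult (RtoC l3) w) (Cmult (RtoC l4) x)))).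
Proof.
  intros Hu Hv Hw Hx H1 H2 H3 H4 Hs. apply hull_hull.
  exists ((l1,u)::(l2,v)::(l3,w)::(l4,x)::nil). split; [|split].
  - constructor; [simpl; split; assumption|]. constructor; [simpl; split; assumption|].
    constructor; [simpl; split; assumption|]. constructor; [simpl; split; assumption|]. constructor.
  - simpl. lra.
  - simpl. destruct u as [u1 u2], v as [v1 v2], w as [w1 w2], x as [x1 x2].
    unfold Cplus, Cmult, RtoC; simpl; f_equal; ring.
Qed.

Lemma tails (Sset : C -> Prop) (eta : R) (N e1 e2 e3 : nat) (l1 l2 l3 : R) :
  (e1 < N)%nat -> (e2 < N)%nat -> (e3 < N)%nat ->
  0 <= l1 -> 0 <= l2 -> 0 <= l3 -> l1 + l2 + l3 <= 1 ->
  Cpow (a_of eta) N = Cplus (Cmult (RtoC l1) (Cpow (a_of eta) e1))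
     (Cplus (Cmult (RtoC l2) (Cpow (a_of eta) e2)) (Cmult (RtoC l3) (Cpow (a_of eta) e3))) ->
  conv_hull Sset (RtoC 0) -> conv_hull Sset (RtoC 1) ->
  (forall j, (j < N)%nat -> conv_hull Sset (z_of eta j)) ->
  (forall j, (j < N)%nat -> conv_hull Sset (w_of eta j)) ->
  forall j, conv_hull Sset (z_of eta j) /\ conv_hull Sset (w_of eta j).
Proof.
  intros He1 He2 He3 Hl1 Hl2 Hl3 Hs HN H0 H1 Bz Bw j.
  induction j as [j IH] using (well_founded_induction Wf_nat.lt_wf).
  destruct (Nat.lt_ge_cases j N) as [Hj|Hj]; [split; auto|].
  set (m := (j - N)%nat).
  assert (Ej : j = (m + N)%nat) by (unfold m; lia).
  destruct (IH (m+e1)%nat ltac:(lia)) as [Z1 W1].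
  destruct (IH (m+e2)%nat ltac:(lia)) as [Z2 W2].
  destruct (IH (m+e3)%nat ltac:(lia)) as [Z3 W3].
  set (l0 := 1 - l1 - l2 - l3).
  assert (Hl0 : 0 <= l0) by (unfold l0; lra).
  set (a := a_of eta) in *.
  assert (Pw : forall n, Cpow a (m + n) = Cmult (Cpow a m) (Cpow a n)) by (intro; apply Cpow_add_r).
  split.
  - replace (z_of eta j) with (Cplus (Cmult (RtoC l1) (z_of eta (m+e1)))
       (Cplus (Cmult (RtoC l2) (z_of eta (m+e2))) (Cplus (Cmult (RtoC l3) (z_of eta (m+e3))) (Cmult (RtoC l0) (RtoC 0))))).
    + apply hull_comb4; auto. unfold l0; lra.
    + unfold z_of. fold a. rewrite Ej.
      change (S (m + N)) with (S m + N)%nat. rewrite Cpow_add_r, HN.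
      change (S (m + e1)) with (S m + e1)%nat. change (S (m + e2)) with (S m + e2)%nat.
      change (S (m + e3)) with (S m + e3)%nat. rewrite !Cpow_add_r.
      destruct (Cpow a (S m)) as [p1 p2], (Cpow a e1) as [x1 y1], (Cpow a e2) as [x2 y2], (Cpow a e3) as [x3 y3].
      unfold Cplus, Cmult, RtoC; simpl; f_equal; ring.
  - replace (w_of eta j) with (Cplus (Cmult (RtoC l1) (w_of eta (m+e1)))
       (Cplus (Cmult (RtoC l2) (w_of eta (m+e2))) (Cplus (Cmult (RtoC l3) (w_of eta (m+e3))) (Cmult (RtoC l0) (RtoC 1))))).
    + apply hull_comb4; auto. unfold l0; lra.
    + unfold w_of. fold a. rewrite Ej. rewrite !Pw, HN.
      destruct (Cpow a m) as [p1 p2], (Cpow a e1) as [x1 y1], (Cpow a e2) as [x2 y2], (Cpow a e3) as [x3 y3].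
      unfold Cminus, Copp, Cplus, Cmult, RtoC; simpl. unfold l0. f_equal; ring.
Qed.

Theorem reduce (k : nat) (eta : R) :
  (forall j, conv_hull (Vk_set k eta) (z_of eta j) /\ conv_hull (Vk_set k eta) (w_of eta j)) ->
  forall x : C, conv_hull (V_set eta) x <-> conv_hull (Vk_set k eta) x.
Proof.
  intros Hall x. split.
  - intros Hx. apply hull_hull. eapply hull_mono; [|exact Hx].
    intros y [Hy|[[j Hy]|[j [_ Hy]]]]; subst y.
    + apply hull_sub. left. reflexivity.
    + apply Hall.
    + apply Hall.
  - apply hull_mono. intros y [Hy|[[j [_ Hy]]|[j [Hj Hy]]]].
    + left; auto.
    + right; left; eauto.
    + right; right; exists j; split; [lia|auto].
Qed.

Definition aC (t : R) : C := (/2, -t/2).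
Definition qq (t : R) : R := (1+t^2)/4.
Definition cc (t : R) : R := 16/((3-t^2)*(5+t^2)).
Definition sC (t l m : R) : C := (-l - m*(1-t^2), -2*t*m).
Definition Zp t l m n : C := Cmult (RtoC (cc t)) (Cmult (sC t l m) (Cpow (aC t) n)).
Definition Wp t l m n : C := Cminus (RtoC 1) (Cmult (RtoC (cc t * qq t)) (Cmult (sC t l m) (Cpow (aC t) n))).
Definition Zf t n : C := Cmult (RtoC (cc t)) (Cpow (aC t) n).
Definition Wf t n : C := Cminus (RtoC 1) (Cmult (RtoC (cc t * qq t)) (Cpow (aC t) n)).
Definition B0 t : C := Cplus (aC t) (RtoC (cc t * qq t ^ 2)).
Definition Rr t l m n : C := Cmult (sC t l m) (Cpow (aC t) n).

Lemma nmul_le a b : a <= 0 -> 0 <= b -> a * b <= 0.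
Proof. intros; nra. Qed.
Lemma nmul_lt a b : a < 0 -> 0 < b -> a * b < 0.
Proof. intros; nra. Qed.
Lemma Rmult_pos_neg_le a b : 0 < a -> b <= 0 -> a * b <= 0.
Proof. intros; nra. Qed.
Lemma Rmult_pos_neg_lt a b : 0 < a -> b < 0 -> a * b < 0.
Proof. intros; nra. Qed.

Ltac kpos := unfold Rdiv; repeat (first [apply Rmult_lt_0_compat | apply Rinv_0_lt_compat | apply pow_lt]); nra.
Ltac cexp := unfold cross, Zp, Wp, Zf, Wf, B0, Rr, sC, aC, cc, qq; cbn [Cpow];
  unfold Cminus, Cplus, Cmult, Copp, RtoC; cbn [fst snd].
Ltac nzt := repeat split; try (intro; nra).

Ltac tfacts t := 
  assert (T2 : 0 < t*t) by nra; assert (T2' : t*t < 1) by nra;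
  assert (T4 : 0 < t*t*t*t) by nra; assert (T4' : t*t*t*t <= t*t) by nra;
  assert (T6 : 0 < t*t*t*t*t*t) by nra; assert (T6' : t*t*t*t*t*t <= t*t*t*t) by nra;
  assert (T8 : 0 < t*t*t*t*t*t*t*t) by nra; assert (T8' : t*t*t*t*t*t*t*t <= t*t*t*t*t*t) by nra;
  assert (T10 : 0 < t*t*t*t*t*t*t*t*t*t) by nra; assert (T10' : t*t*t*t*t*t*t*t*t*t <= t*t*t*t*t*t*t*t) by nra.
Definition T1p (t l m : R) : R := ((11)*m + (4)*m*m + (-15)*l + (8)*l*m + (4)*l*l + (5)*t*t*m + (12)*t*t*m*m + (2)*t*t*l + (4)*t*t*l*l + (-7)*t*t*t*t*m + (12)*t*t*t*t*m*m + (1)*t*t*t*t*l + (-8)*t*t*t*t*l*m + (-1)*t*t*t*t*t*t*m + (4)*t*t*t*t*t*t*m*m).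
Lemma d0_1 (t l m : R) : 0 < t -> t < 1 -> 0 < l -> l <= 1/4 -> 0 < m -> T1p t l m <= 0 ->
  cross (Zp t l m 3) (Zp t l m 2) (Wf t 1) <= 0.
Proof.
  intros ht0 ht1 hl hl4 hm hT. unfold T1p in hT. tfacts t.
  assert (HK : 0 < (2)*(1+t^2)*t/((3-t^2)*(5+t^2))^2) by kpos.
  assert (E : cross (Zp t l m 3) (Zp t l m 2) (Wf t 1) = ((2)*(1+t^2)*t/((3-t^2)*(5+t^2))^2) * ((11)*m + (4)*m*m + (-15)*l + (8)*l*m + (4)*l*l + (5)*t*t*m + (12)*t*t*m*m + (2)*t*t*l + (4)*t*t*l*l + (-7)*t*t*t*t*m + (12)*t*t*t*t*m*m + (1)*t*t*t*t*l + (-8)*t*t*t*t*l*m + (-1)*t*t*t*t*t*t*m + (4)*t*t*t*t*t*t*m*m)) by (cexp; field; nzt).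
  rewrite E. clear E.
  assert (HR : ((11)*m + (4)*m*m + (-15)*l + (8)*l*m + (4)*l*l + (5)*t*t*m + (12)*t*t*m*m + (2)*t*t*l + (4)*t*t*l*l + (-7)*t*t*t*t*m + (12)*t*t*t*t*m*m + (1)*t*t*t*t*l + (-8)*t*t*t*t*l*m + (-1)*t*t*t*t*t*t*m + (4)*t*t*t*t*t*t*m*m) <= 0).
  {  lra. }
  apply Rmult_pos_neg_le; lra.
Qed.

Lemma d0_2 (t l m : R) : 0 < t -> t < 1 -> 0 < l -> l <= 1/4 -> 0 < m -> T1p t l m <= 0 ->
  cross (Zf t 1) (Zp t l m 3) (Wf t 1) < 0.
Proof.
  intros ht0 ht1 hl hl4 hm hT. unfold T1p in hT. tfacts t.
  assert (HK : 0 < (2)*t*(5+t^2)/((3-t^2)*(5+t^2))^2) by kpos.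
  assert (E : cross (Zf t 1) (Zp t l m 3) (Wf t 1) = ((2)*t*(5+t^2)/((3-t^2)*(5+t^2))^2) * ((-12) + (-3)*m + (-5)*l + (4)*t*t + (-5)*t*t*m + (10)*t*t*l + (-1)*t*t*t*t*m + (-1)*t*t*t*t*l + (1)*t*t*t*t*t*t*m)) by (cexp; field; nzt).
  rewrite E. clear E.
  assert (HR : ((-12) + (-3)*m + (-5)*l + (4)*t*t + (-5)*t*t*m + (10)*t*t*l + (-1)*t*t*t*t*m + (-1)*t*t*t*t*l + (1)*t*t*t*t*t*t*m) < 0).
  { assert (F00 : ((-12) + (4)*t*t) <= (-799/100)) by nra. assert (((-3) + (-5)*t*t + (-1)*t*t*t*t + (1)*t*t*t*t*t*t) * (m) < 0) by (apply nmul_lt; [nra| repeat apply Rmult_lt_0_compat; lra]). assert (F10 : l * ((-5) + (10)*t*t + (-1)*t*t*t*t) <= l * (401/100)) by (apply Rmult_le_compat_l; nra). lra. }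
  apply Rmult_pos_neg_lt; lra.
Qed.

Lemma d0_3 (t l m : R) : 0 < t -> t < 1 -> 0 < l -> l <= 1/4 -> 0 < m -> T1p t l m <= 0 ->
  cross (Zf t 1) (Zp t l m 2) (Zp t l m 3) < 0.
Proof.
  intros ht0 ht1 hl hl4 hm hT. unfold T1p in hT. tfacts t.
  assert (HK : 0 < (8)*(1+t^2)*(1+t^2)*t/((3-t^2)*(5+t^2))^2) by kpos.
  assert (E : cross (Zf t 1) (Zp t l m 2) (Zp t l m 3) = ((8)*(1+t^2)*(1+t^2)*t/((3-t^2)*(5+t^2))^2) * ((-4)*m + (-1)*m*m + (-2)*l*m + (-1)*l*l + (-2)*t*t*m*m + (2)*t*t*l*m + (-1)*t*t*t*t*m*m)) by (cexp; field; nzt).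
  rewrite E. clear E.
  assert (HR : ((-4)*m + (-1)*m*m + (-2)*l*m + (-1)*l*l + (-2)*t*t*m*m + (2)*t*t*l*m + (-1)*t*t*t*t*m*m) < 0).
  { assert (((-4)) * (m) < 0) by (apply nmul_lt; [nra| repeat apply Rmult_lt_0_compat; lra]). assert (((-1) + (-2)*t*t + (-1)*t*t*t*t) * (m*m) < 0) by (apply nmul_lt; [nra| repeat apply Rmult_lt_0_compat; lra]). assert (((-2) + (2)*t*t) * (l*m) <= 0) by (apply nmul_le; [nra| repeat apply Rmult_le_pos; lra]). assert (((-1)) * (l*l) < 0) by (apply nmul_lt; [nra| repeat apply Rmult_lt_0_compat; lra]). lra. }
  apply Rmult_pos_neg_lt; lra.
Qed.

Lemma d1_1 (t l m : R) : 0 < t -> t < 1 -> 0 < l -> l <= 1/4 -> 0 < m -> T1p t l m <= 0 ->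
  cross (RtoC 0) (Zp t l m 1) (Zp t l m 3) < 0.
Proof.
  intros ht0 ht1 hl hl4 hm hT. unfold T1p in hT. tfacts t.
  assert (HK : 0 < (32)*(1+t^2)*t/((3-t^2)*(5+t^2))^2) by kpos.
  assert (E : cross (RtoC 0) (Zp t l m 1) (Zp t l m 3) = ((32)*(1+t^2)*t/((3-t^2)*(5+t^2))^2) * ((-1)*m*m + (-2)*l*m + (-1)*l*l + (-2)*t*t*m*m + (2)*t*t*l*m + (-1)*t*t*t*t*m*m)) by (cexp; field; nzt).
  rewrite E. clear E.
  assert (HR : ((-1)*m*m + (-2)*l*m + (-1)*l*l + (-2)*t*t*m*m + (2)*t*t*l*m + (-1)*t*t*t*t*m*m) < 0).
  { assert (((-1) + (-2)*t*t + (-1)*t*t*t*t) * (m*m) < 0) by (apply nmul_lt; [nra| repeat apply Rmult_lt_0_compat; lra]). assert (((-2) + (2)*t*t) * (l*m) <= 0) by (apply nmul_le; [nra| repeat apply Rmult_le_pos; lra]). assert (((-1)) * (l*l) < 0) by (apply nmul_lt; [nra| repeat apply Rmult_lt_0_compat; lra]). lra. }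
  apply Rmult_pos_neg_lt; lra.
Qed.

Lemma d1_2 (t l m : R) : 0 < t -> t < 1 -> 0 < l -> l <= 1/4 -> 0 < m -> T1p t l m <= 0 ->
  cross (Zf t 1) (RtoC 0) (Zp t l m 3) < 0.
Proof.
  intros ht0 ht1 hl hl4 hm hT. unfold T1p in hT. tfacts t.
  assert (HK : 0 < (32)*(1+t^2)*t*l/((3-t^2)*(5+t^2))^2) by kpos.
  assert (E : cross (Zf t 1) (RtoC 0) (Zp t l m 3) = ((32)*(1+t^2)*t*l/((3-t^2)*(5+t^2))^2) * ((-1))) by (cexp; field; nzt).
  rewrite E. clear E.
  assert (HR : ((-1)) < 0).
  { assert (((-1)) < 0) by nra. lra. }
  apply Rmult_pos_neg_lt; lra.
Qed.

Lemma d1_3 (t l m : R) : 0 < t -> t < 1 -> 0 < l -> l <= 1/4 -> 0 < m -> T1p t l m <= 0 ->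
  cross (Zf t 1) (Zp t l m 1) (RtoC 0) < 0.
Proof.
  intros ht0 ht1 hl hl4 hm hT. unfold T1p in hT. tfacts t.
  assert (HK : 0 < (128)*(1+t^2)*t*m/((3-t^2)*(5+t^2))^2) by kpos.
  assert (E : cross (Zf t 1) (Zp t l m 1) (RtoC 0) = ((128)*(1+t^2)*t*m/((3-t^2)*(5+t^2))^2) * ((-1))) by (cexp; field; nzt).
  rewrite E. clear E.
  assert (HR : ((-1)) < 0).
  { assert (((-1)) < 0) by nra. lra. }
  apply Rmult_pos_neg_lt; lra.
Qed.

Lemma d2_1 (t l m : R) : 0 < t -> t < 1 -> 0 < l -> l <= 1/4 -> 0 < m -> T1p t l m <= 0 ->
  0 <= cross (Wp t l m 2) (B0 t) (Wp t l m 1).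
Proof.
  intros ht0 ht1 hl hl4 hm hT. unfold T1p in hT. tfacts t.
  assert (HK : 0 < (1/2)*(1+t^2)*(1+t^2)*t/((3-t^2)*(5+t^2))^2) by kpos.
  assert (E : cross (Wp t l m 2) (B0 t) (Wp t l m 1) = ((1/2)*(1+t^2)*(1+t^2)*t/((3-t^2)*(5+t^2))^2) * ((-11)*m + (-4)*m*m + (15)*l + (-8)*l*m + (-4)*l*l + (-5)*t*t*m + (-12)*t*t*m*m + (-2)*t*t*l + (-4)*t*t*l*l + (7)*t*t*t*t*m + (-12)*t*t*t*t*m*m + (-1)*t*t*t*t*l + (8)*t*t*t*t*l*m + (1)*t*t*t*t*t*t*m + (-4)*t*t*t*t*t*t*m*m)) by (cexp; field; nzt).
  rewrite E. clear E.
  assert (HR : 0 <= ((-11)*m + (-4)*m*m + (15)*l + (-8)*l*m + (-4)*l*l + (-5)*t*t*m + (-12)*t*t*m*m + (-2)*t*t*l + (-4)*t*t*l*l + (7)*t*t*t*t*m + (-12)*t*t*t*t*m*m + (-1)*t*t*t*t*l + (8)*t*t*t*t*l*m + (1)*t*t*t*t*t*t*m + (-4)*t*t*t*t*t*t*m*m)).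
  {  lra. }
  apply Rmult_le_pos; lra.
Qed.

Lemma d2_2 (t l m : R) : 0 < t -> t < 1 -> 0 < l -> l <= 1/4 -> 0 < m -> T1p t l m <= 0 ->
  0 < cross (Wf t 1) (Wp t l m 2) (Wp t l m 1).
Proof.
  intros ht0 ht1 hl hl4 hm hT. unfold T1p in hT. tfacts t.
  assert (HK : 0 < (2)*(1+t^2)*(1+t^2)*(1+t^2)*t/((3-t^2)*(5+t^2))^2) by kpos.
  assert (E : cross (Wf t 1) (Wp t l m 2) (Wp t l m 1) = ((2)*(1+t^2)*(1+t^2)*(1+t^2)*t/((3-t^2)*(5+t^2))^2) * ((3)*m + (1)*m*m + (1)*l + (2)*l*m + (1)*l*l + (-1)*t*t*m + (2)*t*t*m*m + (-2)*t*t*l*m + (1)*t*t*t*t*m*m)) by (cexp; field; nzt).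
  rewrite E. clear E.
  assert (HR : 0 < ((3)*m + (1)*m*m + (1)*l + (2)*l*m + (1)*l*l + (-1)*t*t*m + (2)*t*t*m*m + (-2)*t*t*l*m + (1)*t*t*t*t*m*m)).
  { assert (0 < ((3) + (-1)*t*t) * (m)) by (apply Rmult_lt_0_compat; [nra| repeat apply Rmult_lt_0_compat; lra]). assert (0 < ((1) + (2)*t*t + (1)*t*t*t*t) * (m*m)) by (apply Rmult_lt_0_compat; [nra| repeat apply Rmult_lt_0_compat; lra]). assert (0 < ((1)) * (l)) by (apply Rmult_lt_0_compat; [nra| repeat apply Rmult_lt_0_compat; lra]). assert (0 <= ((2) + (-2)*t*t) * (l*m)) by (apply Rmult_le_pos; [nra| repeat apply Rmult_le_pos; lra]). assert (0 < ((1)) * (l*l)) by (apply Rmult_lt_0_compat; [nra| repeat apply Rmult_lt_0_compat; lra]). lra. }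
  apply Rmult_lt_0_compat; lra.
Qed.

Lemma d2_3 (t l m : R) : 0 < t -> t < 1 -> 0 < l -> l <= 1/4 -> 0 < m -> T1p t l m <= 0 ->
  0 < cross (Wf t 1) (B0 t) (Wp t l m 2).
Proof.
  intros ht0 ht1 hl hl4 hm hT. unfold T1p in hT. tfacts t.
  assert (HK : 0 < (1/2)*(1+t^2)*t/((3-t^2)*(5+t^2))^2) by kpos.
  assert (E : cross (Wf t 1) (B0 t) (Wp t l m 2) = ((1/2)*(1+t^2)*t/((3-t^2)*(5+t^2))^2) * ((56) + (19)*m + (37)*l + (-16)*t*t + (40)*t*t*m + (-37)*t*t*l + (-8)*t*t*t*t + (22)*t*t*t*t*m + (-9)*t*t*t*t*l + (1)*t*t*t*t*t*t*l + (-1)*t*t*t*t*t*t*t*t*m)) by (cexp; field; nzt).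
  rewrite E. clear E.
  assert (HR : 0 < ((56) + (19)*m + (37)*l + (-16)*t*t + (40)*t*t*m + (-37)*t*t*l + (-8)*t*t*t*t + (22)*t*t*t*t*m + (-9)*t*t*t*t*l + (1)*t*t*t*t*t*t*l + (-1)*t*t*t*t*t*t*t*t*m)).
  { assert (F00 : ((56) + (-16)*t*t + (-8)*t*t*t*t) >= (3199/100)) by nra. assert (0 < ((19) + (40)*t*t + (22)*t*t*t*t + (-1)*t*t*t*t*t*t*t*t) * (m)) by (apply Rmult_lt_0_compat; [nra| repeat apply Rmult_lt_0_compat; lra]). assert (F10 : l * (-801/100) <= l * ((37) + (-37)*t*t + (-9)*t*t*t*t + (1)*t*t*t*t*t*t)) by (apply Rmult_le_compat_l; nra). lra. }
  apply Rmult_lt_0_compat; lra.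
Qed.

Lemma d3_1 (t l m : R) : 0 < t -> t < 1 -> 0 < l -> l <= 1/4 -> 0 < m -> T1p t l m <= 0 ->
  cross (RtoC 1) (Wp t l m 0) (Wp t l m 2) < 0.
Proof.
  intros ht0 ht1 hl hl4 hm hT. unfold T1p in hT. tfacts t.
  assert (HK : 0 < (8)*(1+t^2)*(1+t^2)*t/((3-t^2)*(5+t^2))^2) by kpos.
  assert (E : cross (RtoC 1) (Wp t l m 0) (Wp t l m 2) = ((8)*(1+t^2)*(1+t^2)*t/((3-t^2)*(5+t^2))^2) * ((-1)*m*m + (-2)*l*m + (-1)*l*l + (-2)*t*t*m*m + (2)*t*t*l*m + (-1)*t*t*t*t*m*m)) by (cexp; field; nzt).
  rewrite E. clear E.
  assert (HR : ((-1)*m*m + (-2)*l*m + (-1)*l*l + (-2)*t*t*m*m + (2)*t*t*l*m + (-1)*t*t*t*t*m*m) < 0).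
  { assert (((-1) + (-2)*t*t + (-1)*t*t*t*t) * (m*m) < 0) by (apply nmul_lt; [nra| repeat apply Rmult_lt_0_compat; lra]). assert (((-2) + (2)*t*t) * (l*m) <= 0) by (apply nmul_le; [nra| repeat apply Rmult_le_pos; lra]). assert (((-1)) * (l*l) < 0) by (apply nmul_lt; [nra| repeat apply Rmult_lt_0_compat; lra]). lra. }
  apply Rmult_pos_neg_lt; lra.
Qed.

Lemma d3_2 (t l m : R) : 0 < t -> t < 1 -> 0 < l -> l <= 1/4 -> 0 < m -> T1p t l m <= 0 ->
  cross (Wf t 0) (RtoC 1) (Wp t l m 2) < 0.
Proof.
  intros ht0 ht1 hl hl4 hm hT. unfold T1p in hT. tfacts t.
  assert (HK : 0 < (8)*(1+t^2)*(1+t^2)*t*l/((3-t^2)*(5+t^2))^2) by kpos.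
  assert (E : cross (Wf t 0) (RtoC 1) (Wp t l m 2) = ((8)*(1+t^2)*(1+t^2)*t*l/((3-t^2)*(5+t^2))^2) * ((-1))) by (cexp; field; nzt).
  rewrite E. clear E.
  assert (HR : ((-1)) < 0).
  { assert (((-1)) < 0) by nra. lra. }
  apply Rmult_pos_neg_lt; lra.
Qed.

Lemma d3_3 (t l m : R) : 0 < t -> t < 1 -> 0 < l -> l <= 1/4 -> 0 < m -> T1p t l m <= 0 ->
  cross (Wf t 0) (Wp t l m 0) (RtoC 1) < 0.
Proof.
  intros ht0 ht1 hl hl4 hm hT. unfold T1p in hT. tfacts t.
  assert (HK : 0 < (32)*(1+t^2)*(1+t^2)*t*m/((3-t^2)*(5+t^2))^2) by kpos.
  assert (E : cross (Wf t 0) (Wp t l m 0) (RtoC 1) = ((32)*(1+t^2)*(1+t^2)*t*m/((3-t^2)*(5+t^2))^2) * ((-1))) by (cexp; field; nzt).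
  rewrite E. clear E.
  assert (HR : ((-1)) < 0).
  { assert (((-1)) < 0) by nra. lra. }
  apply Rmult_pos_neg_lt; lra.
Qed.

Lemma d4_1 (t l m : R) : 0 < t -> t < 1 -> 0 < l -> l <= 1/4 -> 0 < m -> T1p t l m <= 0 ->
  cross (Wf t 0) (RtoC 0) (Wf t 1) < 0.
Proof.
  intros ht0 ht1 hl hl4 hm hT. unfold T1p in hT. tfacts t.
  assert (HK : 0 < (2)*(1+t^2)*t/((3-t^2)*(5+t^2))^2) by kpos.
  assert (E : cross (Wf t 0) (RtoC 0) (Wf t 1) = ((2)*(1+t^2)*t/((3-t^2)*(5+t^2))^2) * ((-11) + (6)*t*t + (1)*t*t*t*t)) by (cexp; field; nzt).
  rewrite E. clear E.
  assert (HR : ((-11) + (6)*t*t + (1)*t*t*t*t) < 0).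
  { assert (((-11) + (6)*t*t + (1)*t*t*t*t) < 0) by nra. lra. }
  apply Rmult_pos_neg_lt; lra.
Qed.

Lemma d4_2 (t l m : R) : 0 < t -> t < 1 -> 0 < l -> l <= 1/4 -> 0 < m -> T1p t l m <= 0 ->
  cross (B0 t) (Wf t 0) (Wf t 1) < 0.
Proof.
  intros ht0 ht1 hl hl4 hm hT. unfold T1p in hT. tfacts t.
  assert (HK : 0 < (2)*(1+t^2)*(1+t^2)*t*(5+t^2)/((3-t^2)*(5+t^2))^2) by kpos.
  assert (E : cross (B0 t) (Wf t 0) (Wf t 1) = ((2)*(1+t^2)*(1+t^2)*t*(5+t^2)/((3-t^2)*(5+t^2))^2) * ((-1))) by (cexp; field; nzt).
  rewrite E. clear E.
  assert (HR : ((-1)) < 0).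
  { assert (((-1)) < 0) by nra. lra. }
  apply Rmult_pos_neg_lt; lra.
Qed.

Lemma d4_3 (t l m : R) : 0 < t -> t < 1 -> 0 < l -> l <= 1/4 -> 0 < m -> T1p t l m <= 0 ->
  cross (B0 t) (RtoC 0) (Wf t 0) < 0.
Proof.
  intros ht0 ht1 hl hl4 hm hT. unfold T1p in hT. tfacts t.
  assert (HK : 0 < (1/2)*t*(3-t^2)*(5+t^2)/((3-t^2)*(5+t^2))^2) by kpos.
  assert (E : cross (B0 t) (RtoC 0) (Wf t 0) = ((1/2)*t*(3-t^2)*(5+t^2)/((3-t^2)*(5+t^2))^2) * ((-11) + (6)*t*t + (1)*t*t*t*t)) by (cexp; field; nzt).
  rewrite E. clear E.
  assert (HR : ((-11) + (6)*t*t + (1)*t*t*t*t) < 0).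
  { assert (((-11) + (6)*t*t + (1)*t*t*t*t) < 0) by nra. lra. }
  apply Rmult_pos_neg_lt; lra.
Qed.

Lemma d5_1 (t l m : R) : 0 < t -> t < 1 -> 0 < l -> l <= 1/4 -> 0 < m -> T1p t l m <= 0 ->
  cross (Zp t l m 4) (Zp t l m 3) (Wp t l m 2) < 0.
Proof.
  intros ht0 ht1 hl hl4 hm hT. unfold T1p in hT. tfacts t.
  assert (HK : 0 < (2)*(1+t^2)*t/((3-t^2)*(5+t^2))^2) by kpos.
  assert (E : cross (Zp t l m 4) (Zp t l m 3) (Wp t l m 2) = ((2)*(1+t^2)*t/((3-t^2)*(5+t^2))^2) * ((1)*m*m + (-15)*l + (2)*l*m + (1)*l*l + (4)*t*t*m*m + (2)*t*t*l + (2)*t*t*l*m + (2)*t*t*l*l + (6)*t*t*t*t*m*m + (1)*t*t*t*t*l + (-2)*t*t*t*t*l*m + (1)*t*t*t*t*l*l + (4)*t*t*t*t*t*t*m*m + (-2)*t*t*t*t*t*t*l*m + (1)*t*t*t*t*t*t*t*t*m*m)) by (cexp; field; nzt).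
  rewrite E. clear E.
  assert (HR : ((1)*m*m + (-15)*l + (2)*l*m + (1)*l*l + (4)*t*t*m*m + (2)*t*t*l + (2)*t*t*l*m + (2)*t*t*l*l + (6)*t*t*t*t*m*m + (1)*t*t*t*t*l + (-2)*t*t*t*t*l*m + (1)*t*t*t*t*l*l + (4)*t*t*t*t*t*t*m*m + (-2)*t*t*t*t*t*t*l*m + (1)*t*t*t*t*t*t*t*t*m*m) < 0).
  { assert (((-11) + (-5)*t*t + (7)*t*t*t*t + (1)*t*t*t*t*t*t) * (m) < 0) by (apply nmul_lt; [nra| repeat apply Rmult_lt_0_compat; lra]). assert (((-3) + (-8)*t*t + (-6)*t*t*t*t + (1)*t*t*t*t*t*t*t*t) * (m*m) < 0) by (apply nmul_lt; [nra| repeat apply Rmult_lt_0_compat; lra]). assert (((-6) + (2)*t*t + (6)*t*t*t*t + (-2)*t*t*t*t*t*t) * (l*m) <= 0) by (apply nmul_le; [nra| repeat apply Rmult_le_pos; lra]). assert (((-3) + (-2)*t*t + (1)*t*t*t*t) * (l*l) < 0) by (apply nmul_lt; [nra| repeat apply Rmult_lt_0_compat; lra]). lra. }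
  apply Rmult_pos_neg_lt; lra.
Qed.

Lemma d5_2 (t l m : R) : 0 < t -> t < 1 -> 0 < l -> l <= 1/4 -> 0 < m -> T1p t l m <= 0 ->
  cross (RtoC 0) (Zp t l m 4) (Wp t l m 2) < 0.
Proof.
  intros ht0 ht1 hl hl4 hm hT. unfold T1p in hT. tfacts t.
  assert (HK : 0 < (2)*t/((3-t^2)*(5+t^2))^2) by kpos.
  assert (E : cross (RtoC 0) (Zp t l m 4) (Wp t l m 2) = ((2)*t/((3-t^2)*(5+t^2))^2) * ((-15)*m + (-1)*m*m + (-30)*l + (-2)*l*m + (-1)*l*l + (-28)*t*t*m + (-5)*t*t*m*m + (34)*t*t*l + (-4)*t*t*l*m + (-3)*t*t*l*l + (-10)*t*t*t*t*m + (-10)*t*t*t*t*m*m + (-2)*t*t*t*t*l + (-3)*t*t*t*t*l*l + (4)*t*t*t*t*t*t*m + (-10)*t*t*t*t*t*t*m*m + (-2)*t*t*t*t*t*t*l + (4)*t*t*t*t*t*t*l*m + (-1)*t*t*t*t*t*t*l*l + (1)*t*t*t*t*t*t*t*t*m + (-5)*t*t*t*t*t*t*t*t*m*m + (2)*t*t*t*t*t*t*t*t*l*m + (-1)*t*t*t*t*t*t*t*t*t*t*m*m)) by (cexp; field; nzt).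
  rewrite E. clear E.
  assert (HR : ((-15)*m + (-1)*m*m + (-30)*l + (-2)*l*m + (-1)*l*l + (-28)*t*t*m + (-5)*t*t*m*m + (34)*t*t*l + (-4)*t*t*l*m + (-3)*t*t*l*l + (-10)*t*t*t*t*m + (-10)*t*t*t*t*m*m + (-2)*t*t*t*t*l + (-3)*t*t*t*t*l*l + (4)*t*t*t*t*t*t*m + (-10)*t*t*t*t*t*t*m*m + (-2)*t*t*t*t*t*t*l + (4)*t*t*t*t*t*t*l*m + (-1)*t*t*t*t*t*t*l*l + (1)*t*t*t*t*t*t*t*t*m + (-5)*t*t*t*t*t*t*t*t*m*m + (2)*t*t*t*t*t*t*t*t*l*m + (-1)*t*t*t*t*t*t*t*t*t*t*m*m) < 0).
  { assert (((-15) + (-28)*t*t + (-10)*t*t*t*t + (4)*t*t*t*t*t*t + (1)*t*t*t*t*t*t*t*t) * (m) < 0) by (apply nmul_lt; [nra| repeat apply Rmult_lt_0_compat; lra]). assert (((-1) + (-5)*t*t + (-10)*t*t*t*t + (-10)*t*t*t*t*t*t + (-5)*t*t*t*t*t*t*t*t + (-1)*t*t*t*t*t*t*t*t*t*t) * (m*m) < 0) by (apply nmul_lt; [nra| repeat apply Rmult_lt_0_compat; lra]). assert (((-30) + (34)*t*t + (-2)*t*t*t*t + (-2)*t*t*t*t*t*t) * (l) <= 0) by (apply nmul_le; [nra| repeat apply Rmult_le_pos; lra]). assert (((-2) + (-4)*t*t + (4)*t*t*t*t*t*t + (2)*t*t*t*t*t*t*t*t) * (l*m) <= 0) by (apply nmul_le;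 [nra| repeat apply Rmult_le_pos; lra]). assert (((-1) + (-3)*t*t + (-3)*t*t*t*t + (-1)*t*t*t*t*t*t) * (l*l) < 0) by (apply nmul_lt; [nra| repeat apply Rmult_lt_0_compat; lra]). lra. }
  apply Rmult_pos_neg_lt; lra.
Qed.

Lemma d5_3 (t l m : R) : 0 < t -> t < 1 -> 0 < l -> l <= 1/4 -> 0 < m -> T1p t l m <= 0 ->
  cross (RtoC 0) (Zp t l m 3) (Zp t l m 4) < 0.
Proof.
  intros ht0 ht1 hl hl4 hm hT. unfold T1p in hT. tfacts t.
  assert (HK : 0 < (2)*(1+t^2)*(1+t^2)*(1+t^2)*t/((3-t^2)*(5+t^2))^2) by kpos.
  assert (E : cross (RtoC 0) (Zp t l m 3) (Zp t l m 4) = ((2)*(1+t^2)*(1+t^2)*(1+t^2)*t/((3-t^2)*(5+t^2))^2) * ((-1)*m*m + (-2)*l*m + (-1)*l*l + (-2)*t*t*m*m + (2)*t*t*l*m + (-1)*t*t*t*t*m*m)) by (cexp; field; nzt).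
  rewrite E. clear E.
  assert (HR : ((-1)*m*m + (-2)*l*m + (-1)*l*l + (-2)*t*t*m*m + (2)*t*t*l*m + (-1)*t*t*t*t*m*m) < 0).
  { assert (((-1) + (-2)*t*t + (-1)*t*t*t*t) * (m*m) < 0) by (apply nmul_lt; [nra| repeat apply Rmult_lt_0_compat; lra]). assert (((-2) + (2)*t*t) * (l*m) <= 0) by (apply nmul_le; [nra| repeat apply Rmult_le_pos; lra]). assert (((-1)) * (l*l) < 0) by (apply nmul_lt; [nra| repeat apply Rmult_lt_0_compat; lra]). lra. }
  apply Rmult_pos_neg_lt; lra.
Qed.

Lemma d6_1 (t l m : R) : 0 < t -> t < 1 -> 0 < l -> l <= 1/4 -> 0 < m -> T1p t l m <= 0 ->
  cross (Wp t l m 3) (Wp t l m 2) (Zf t 2) < 0.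
Proof.
  intros ht0 ht1 hl hl4 hm hT. unfold T1p in hT. tfacts t.
  assert (HK : 0 < (1/2)*(1+t^2)*(1+t^2)*t/((3-t^2)*(5+t^2))^2) by kpos.
  assert (E : cross (Wp t l m 3) (Wp t l m 2) (Zf t 2) = ((1/2)*(1+t^2)*(1+t^2)*t/((3-t^2)*(5+t^2))^2) * ((3)*m + (1)*m*m + (-19)*l + (2)*l*m + (1)*l*l + (5)*t*t*m + (4)*t*t*m*m + (-2)*t*t*l + (2)*t*t*l*m + (2)*t*t*l*l + (1)*t*t*t*t*m + (6)*t*t*t*t*m*m + (1)*t*t*t*t*l + (-2)*t*t*t*t*l*m + (1)*t*t*t*t*l*l + (-1)*t*t*t*t*t*t*m + (4)*t*t*t*t*t*t*m*m + (-2)*t*t*t*t*t*t*l*m + (1)*t*t*t*t*t*t*t*t*m*m)) by (cexp; field; nzt).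
  rewrite E. clear E.
  assert (HR : ((3)*m + (1)*m*m + (-19)*l + (2)*l*m + (1)*l*l + (5)*t*t*m + (4)*t*t*m*m + (-2)*t*t*l + (2)*t*t*l*m + (2)*t*t*l*l + (1)*t*t*t*t*m + (6)*t*t*t*t*m*m + (1)*t*t*t*t*l + (-2)*t*t*t*t*l*m + (1)*t*t*t*t*l*l + (-1)*t*t*t*t*t*t*m + (4)*t*t*t*t*t*t*m*m + (-2)*t*t*t*t*t*t*l*m + (1)*t*t*t*t*t*t*t*t*m*m) < 0).
  { assert (((-8) + (8)*t*t*t*t) * (m) <= 0) by (apply nmul_le; [nra| repeat apply Rmult_le_pos; lra]). assert (((-3) + (-8)*t*t + (-6)*t*t*t*t + (1)*t*t*t*t*t*t*t*t) * (m*m) < 0) by (apply nmul_lt; [nra| repeat apply Rmult_lt_0_compat; lra]). assert (((-4) + (-4)*t*t) * (l) < 0) by (apply nmul_lt; [nra| repeat apply Rmult_lt_0_compat; lra]). assert (((-6) + (2)*t*t + (6)*t*t*t*t + (-2)*t*t*t*t*t*t) * (l*m) <= 0) by (apply nmul_le; [nra| repeat apply Rmult_le_pos; lra]). assert (((-3) + (-2)*t*t + (1)*t*t*t*t) * (l*l) < 0) by (apply nmul_lt; [nra| repeat apply Rmult_lt_0_compat; lra]). lra. }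
  apply Rmult_pos_neg_lt; lra.
Qed.

Lemma d6_2 (t l m : R) : 0 < t -> t < 1 -> 0 < l -> l <= 1/4 -> 0 < m -> T1p t l m <= 0 ->
  cross (RtoC 1) (Wp t l m 3) (Zf t 2) < 0.
Proof.
  intros ht0 ht1 hl hl4 hm hT. unfold T1p in hT. tfacts t.
  assert (HK : 0 < (1/2)*(1+t^2)*t/((3-t^2)*(5+t^2))^2) by kpos.
  assert (E : cross (RtoC 1) (Wp t l m 3) (Zf t 2) = ((1/2)*(1+t^2)*t/((3-t^2)*(5+t^2))^2) * ((-19)*m + (-41)*l + (-40)*t*t*m + (29)*t*t*l + (-22)*t*t*t*t*m + (5)*t*t*t*t*l + (-1)*t*t*t*t*t*t*l + (1)*t*t*t*t*t*t*t*t*m)) by (cexp; field; nzt).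
  rewrite E. clear E.
  assert (HR : ((-19)*m + (-41)*l + (-40)*t*t*m + (29)*t*t*l + (-22)*t*t*t*t*m + (5)*t*t*t*t*l + (-1)*t*t*t*t*t*t*l + (1)*t*t*t*t*t*t*t*t*m) < 0).
  { assert (((-19) + (-40)*t*t + (-22)*t*t*t*t + (1)*t*t*t*t*t*t*t*t) * (m) < 0) by (apply nmul_lt; [nra| repeat apply Rmult_lt_0_compat; lra]). assert (((-41) + (29)*t*t + (5)*t*t*t*t + (-1)*t*t*t*t*t*t) * (l) < 0) by (apply nmul_lt; [nra| repeat apply Rmult_lt_0_compat; lra]). lra. }
  apply Rmult_pos_neg_lt; lra.
Qed.

Lemma d6_3 (t l m : R) : 0 < t -> t < 1 -> 0 < l -> l <= 1/4 -> 0 < m -> T1p t l m <= 0 ->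
  cross (RtoC 1) (Wp t l m 2) (Wp t l m 3) < 0.
Proof.
  intros ht0 ht1 hl hl4 hm hT. unfold T1p in hT. tfacts t.
  assert (HK : 0 < (1/2)*(1+t^2)*(1+t^2)*(1+t^2)*(1+t^2)*t/((3-t^2)*(5+t^2))^2) by kpos.
  assert (E : cross (RtoC 1) (Wp t l m 2) (Wp t l m 3) = ((1/2)*(1+t^2)*(1+t^2)*(1+t^2)*(1+t^2)*t/((3-t^2)*(5+t^2))^2) * ((-1)*m*m + (-2)*l*m + (-1)*l*l + (-2)*t*t*m*m + (2)*t*t*l*m + (-1)*t*t*t*t*m*m)) by (cexp; field; nzt).
  rewrite E. clear E.
  assert (HR : ((-1)*m*m + (-2)*l*m + (-1)*l*l + (-2)*t*t*m*m + (2)*t*t*l*m + (-1)*t*t*t*t*m*m) < 0).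
  { assert (((-1) + (-2)*t*t + (-1)*t*t*t*t) * (m*m) < 0) by (apply nmul_lt; [nra| repeat apply Rmult_lt_0_compat; lra]). assert (((-2) + (2)*t*t) * (l*m) <= 0) by (apply nmul_le; [nra| repeat apply Rmult_le_pos; lra]). assert (((-1)) * (l*l) < 0) by (apply nmul_lt; [nra| repeat apply Rmult_lt_0_compat; lra]). lra. }
  apply Rmult_pos_neg_lt; lra.
Qed.

Lemma d7_1 (t l m : R) : 0 < t -> t < 1 -> 0 < l -> l <= 1/4 -> 0 < m -> T1p t l m <= 0 ->
  0 < cross (Rr t l m 4) (RtoC 1) (Rr t l m 3).
Proof.
  intros ht0 ht1 hl hl4 hm hT. unfold T1p in hT. tfacts t.
  assert (HK : 0 < (1/128)*(1+t^2)*t) by kpos.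
  assert (E : cross (Rr t l m 4) (RtoC 1) (Rr t l m 3) = ((1/128)*(1+t^2)*t) * ((-1)*m*m + (16)*l + (-2)*l*m + (-1)*l*l + (-4)*t*t*m*m + (-2)*t*t*l*m + (-2)*t*t*l*l + (-6)*t*t*t*t*m*m + (2)*t*t*t*t*l*m + (-1)*t*t*t*t*l*l + (-4)*t*t*t*t*t*t*m*m + (2)*t*t*t*t*t*t*l*m + (-1)*t*t*t*t*t*t*t*t*m*m)) by (cexp; field; nzt).
  rewrite E. clear E.
  assert (HR : 0 < ((-1)*m*m + (16)*l + (-2)*l*m + (-1)*l*l + (-4)*t*t*m*m + (-2)*t*t*l*m + (-2)*t*t*l*l + (-6)*t*t*t*t*m*m + (2)*t*t*t*t*l*m + (-1)*t*t*t*t*l*l + (-4)*t*t*t*t*t*t*m*m + (2)*t*t*t*t*t*t*l*m + (-1)*t*t*t*t*t*t*t*t*m*m)).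
  { assert (0 < ((11) + (5)*t*t + (-7)*t*t*t*t + (-1)*t*t*t*t*t*t) * (m)) by (apply Rmult_lt_0_compat; [nra| repeat apply Rmult_lt_0_compat; lra]). assert (0 < ((3) + (8)*t*t + (6)*t*t*t*t + (-1)*t*t*t*t*t*t*t*t) * (m*m)) by (apply Rmult_lt_0_compat; [nra| repeat apply Rmult_lt_0_compat; lra]). assert (0 < ((1) + (2)*t*t + (1)*t*t*t*t) * (l)) by (apply Rmult_lt_0_compat; [nra| repeat apply Rmult_lt_0_compat; lra]). assert (0 <= ((6) + (-2)*t*t + (-6)*t*t*t*t + (2)*t*t*t*t*t*t) * (l*m)) by (apply Rmult_le_pos; [nra| repeat apply Rmult_le_pos; lra]). assert (0 < ((3) + (2)*t*t + (-1)*t*t*t*t) * (l*l)) by (apply Rmult_lt_0_compat; [nra| repeat apply Rmult_lt_0_compat; lra]). lra. }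
  apply Rmult_lt_0_compat; lra.
Qed.

Lemma d7_2 (t l m : R) : 0 < t -> t < 1 -> 0 < l -> l <= 1/4 -> 0 < m -> T1p t l m <= 0 ->
  0 < cross (RtoC 0) (Rr t l m 4) (Rr t l m 3).
Proof.
  intros ht0 ht1 hl hl4 hm hT. unfold T1p in hT. tfacts t.
  assert (HK : 0 < (1/128)*(1+t^2)*(1+t^2)*(1+t^2)*t) by kpos.
  assert (E : cross (RtoC 0) (Rr t l m 4) (Rr t l m 3) = ((1/128)*(1+t^2)*(1+t^2)*(1+t^2)*t) * ((1)*m*m + (2)*l*m + (1)*l*l + (2)*t*t*m*m + (-2)*t*t*l*m + (1)*t*t*t*t*m*m)) by (cexp; field; nzt).
  rewrite E. clear E.
  assert (HR : 0 < ((1)*m*m + (2)*l*m + (1)*l*l + (2)*t*t*m*m + (-2)*t*t*l*m + (1)*t*t*t*t*m*m)).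
  { assert (0 < ((1) + (2)*t*t + (1)*t*t*t*t) * (m*m)) by (apply Rmult_lt_0_compat; [nra| repeat apply Rmult_lt_0_compat; lra]). assert (0 <= ((2) + (-2)*t*t) * (l*m)) by (apply Rmult_le_pos; [nra| repeat apply Rmult_le_pos; lra]). assert (0 < ((1)) * (l*l)) by (apply Rmult_lt_0_compat; [nra| repeat apply Rmult_lt_0_compat; lra]). lra. }
  apply Rmult_lt_0_compat; lra.
Qed.

Lemma d7_3 (t l m : R) : 0 < t -> t < 1 -> 0 < l -> l <= 1/4 -> 0 < m -> T1p t l m <= 0 ->
  0 < cross (RtoC 0) (RtoC 1) (Rr t l m 4).
Proof.
  intros ht0 ht1 hl hl4 hm hT. unfold T1p in hT. tfacts t.
  assert (HK : 0 < (1/8)*t) by kpos.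
  assert (E : cross (RtoC 0) (RtoC 1) (Rr t l m 4) = ((1/8)*t) * ((1)*m + (2)*l + (2)*t*t*m + (-2)*t*t*l + (1)*t*t*t*t*m)) by (cexp; field; nzt).
  rewrite E. clear E.
  assert (HR : 0 < ((1)*m + (2)*l + (2)*t*t*m + (-2)*t*t*l + (1)*t*t*t*t*m)).
  { assert (0 < ((1) + (2)*t*t + (1)*t*t*t*t) * (m)) by (apply Rmult_lt_0_compat; [nra| repeat apply Rmult_lt_0_compat; lra]). assert (0 <= ((2) + (-2)*t*t) * (l)) by (apply Rmult_le_pos; [nra| repeat apply Rmult_le_pos; lra]). lra. }
  apply Rmult_lt_0_compat; lra.
Qed.

Lemma cert0 (t l m : R) : 0 < t -> t < 1 -> 0 < l -> l <= 1/4 -> 0 < m -> T1p t l m <= 0 ->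
  (0 <= cross (Zp t l m 3) (Zp t l m 2) (Wf t 1) /\ 0 <= cross (Zf t 1) (Zp t l m 3) (Wf t 1) /\ 0 <= cross (Zf t 1) (Zp t l m 2) (Zp t l m 3) /\ 0 < cross (Zp t l m 3) (Zp t l m 2) (Wf t 1) + cross (Zf t 1) (Zp t l m 3) (Wf t 1) + cross (Zf t 1) (Zp t l m 2) (Zp t l m 3)) \/ (cross (Zp t l m 3) (Zp t l m 2) (Wf t 1) <= 0 /\ cross (Zf t 1) (Zp t l m 3) (Wf t 1) <= 0 /\ cross (Zf t 1) (Zp t l m 2) (Zp t l m 3) <= 0 /\ cross (Zp t l m 3) (Zp t l m 2) (Wf t 1) + cross (Zf t 1) (Zp t l m 3) (Wf t 1) + cross (Zf t 1) (Zp t l m 2) (Zp t l m 3) < 0).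
Proof.
  intros. pose proof (d0_1 t l m ltac:(assumption) ltac:(assumption) ltac:(assumption) ltac:(assumption) ltac:(assumption) ltac:(assumption)).
  pose proof (d0_2 t l m ltac:(assumption) ltac:(assumption) ltac:(assumption) ltac:(assumption) ltac:(assumption) ltac:(assumption)).
  pose proof (d0_3 t l m ltac:(assumption) ltac:(assumption) ltac:(assumption) ltac:(assumption) ltac:(assumption) ltac:(assumption)).
  right; repeat split; lra.
Qed.

Lemma cert1 (t l m : R) : 0 < t -> t < 1 -> 0 < l -> l <= 1/4 -> 0 < m -> T1p t l m <= 0 ->
  (0 <= cross (RtoC 0) (Zp t l m 1) (Zp t l m 3) /\ 0 <= cross (Zf t 1) (RtoC 0) (Zp t l m 3) /\ 0 <= cross (Zf t 1) (Zp t l m 1) (RtoC 0) /\ 0 < cross (RtoC 0) (Zp t l m 1) (Zp t l m 3) + cross (Zf t 1) (RtoC 0) (Zp t l m 3) + cross (Zf t 1) (Zp t l m 1) (RtoC 0)) \/ (cross (RtoC 0) (Zp t l m 1) (Zp t l m 3) <= 0 /\ cross (Zf t 1) (RtoC 0) (Zp t l m 3) <= 0 /\ cross (Zf t 1) (Zp t l m 1) (RtoC 0) <= 0 /\ cross (RtoC 0) (Zp t l m 1) (Zp t l m 3) + cross (Zf t 1) (RtoC 0) (Zp t l m 3) + cross (Zf t 1) (Zp t l m 1) (RtoC 0) < 0).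
Proof.
  intros. pose proof (d1_1 t l m ltac:(assumption) ltac:(assumption) ltac:(assumption) ltac:(assumption) ltac:(assumption) ltac:(assumption)).
  pose proof (d1_2 t l m ltac:(assumption) ltac:(assumption) ltac:(assumption) ltac:(assumption) ltac:(assumption) ltac:(assumption)).
  pose proof (d1_3 t l m ltac:(assumption) ltac:(assumption) ltac:(assumption) ltac:(assumption) ltac:(assumption) ltac:(assumption)).
  right; repeat split; lra.
Qed.

Lemma cert2 (t l m : R) : 0 < t -> t < 1 -> 0 < l -> l <= 1/4 -> 0 < m -> T1p t l m <= 0 ->
  (0 <= cross (Wp t l m 2) (B0 t) (Wp t l m 1) /\ 0 <= cross (Wf t 1) (Wp t l m 2) (Wp t l m 1) /\ 0 <= cross (Wf t 1) (B0 t) (Wp t l m 2) /\ 0 < cross (Wp t l m 2) (B0 t) (Wp t l m 1) + cross (Wf t 1) (Wp t l m 2) (Wp t l m 1) + cross (Wf t 1) (B0 t) (Wp t l m 2)) \/ (cross (Wp t l m 2) (B0 t) (Wp t l m 1) <= 0 /\ cross (Wf t 1) (Wp t l m 2) (Wp t l m 1) <= 0 /\ cross (Wf t 1) (B0 t) (Wp t l m 2) <= 0 /\ cross (Wp t l m 2) (B0 t) (Wp t l m 1) + cross (Wf t 1) (Wp t l m 2) (Wp t l m 1) + cross (Wf t 1) (B0 t) (Wp t l m 2) < 0).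
Proof.
  intros. pose proof (d2_1 t l m ltac:(assumption) ltac:(assumption) ltac:(assumption) ltac:(assumption) ltac:(assumption) ltac:(assumption)).
  pose proof (d2_2 t l m ltac:(assumption) ltac:(assumption) ltac:(assumption) ltac:(assumption) ltac:(assumption) ltac:(assumption)).
  pose proof (d2_3 t l m ltac:(assumption) ltac:(assumption) ltac:(assumption) ltac:(assumption) ltac:(assumption) ltac:(assumption)).
  left; repeat split; lra.
Qed.

Lemma cert3 (t l m : R) : 0 < t -> t < 1 -> 0 < l -> l <= 1/4 -> 0 < m -> T1p t l m <= 0 ->
  (0 <= cross (RtoC 1) (Wp t l m 0) (Wp t l m 2) /\ 0 <= cross (Wf t 0) (RtoC 1) (Wp t l m 2) /\ 0 <= cross (Wf t 0) (Wp t l m 0) (RtoC 1) /\ 0 < cross (RtoC 1) (Wp t l m 0) (Wp t l m 2) + cross (Wf t 0) (RtoC 1) (Wp t l m 2) + cross (Wf t 0) (Wp t l m 0) (RtoC 1)) \/ (cross (RtoC 1) (Wp t l m 0) (Wp t l m 2) <= 0 /\ cross (Wf t 0) (RtoC 1) (Wp t l m 2) <= 0 /\ cross (Wf t 0) (Wp t l m 0) (RtoC 1) <= 0 /\ cross (RtoC 1) (Wp t l m 0) (Wp t l m 2) + cross (Wf t 0) (RtoC 1) (Wp t l m 2) + cross (Wf t 0) (Wp t l m 0) (RtoC 1) < 0).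
Proof.
  intros. pose proof (d3_1 t l m ltac:(assumption) ltac:(assumption) ltac:(assumption) ltac:(assumption) ltac:(assumption) ltac:(assumption)).
  pose proof (d3_2 t l m ltac:(assumption) ltac:(assumption) ltac:(assumption) ltac:(assumption) ltac:(assumption) ltac:(assumption)).
  pose proof (d3_3 t l m ltac:(assumption) ltac:(assumption) ltac:(assumption) ltac:(assumption) ltac:(assumption) ltac:(assumption)).
  right; repeat split; lra.
Qed.

Lemma cert4 (t l m : R) : 0 < t -> t < 1 -> 0 < l -> l <= 1/4 -> 0 < m -> T1p t l m <= 0 ->
  (0 <= cross (Wf t 0) (RtoC 0) (Wf t 1) /\ 0 <= cross (B0 t) (Wf t 0) (Wf t 1) /\ 0 <= cross (B0 t) (RtoC 0) (Wf t 0) /\ 0 < cross (Wf t 0) (RtoC 0) (Wf t 1) + cross (B0 t) (Wf t 0) (Wf t 1) + cross (B0 t) (RtoC 0) (Wf t 0)) \/ (cross (Wf t 0) (RtoC 0) (Wf t 1) <= 0 /\ cross (B0 t) (Wf t 0) (Wf t 1) <= 0 /\ cross (B0 t) (RtoC 0) (Wf t 0) <= 0 /\ cross (Wf t 0) (RtoC 0) (Wf t 1) + cross (B0 t) (Wf t 0) (Wf t 1) + cross (B0 t) (RtoC 0) (Wf t 0) < 0).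
Proof.
  intros. pose proof (d4_1 t l m ltac:(assumption) ltac:(assumption) ltac:(assumption) ltac:(assumption) ltac:(assumption) ltac:(assumption)).
  pose proof (d4_2 t l m ltac:(assumption) ltac:(assumption) ltac:(assumption) ltac:(assumption) ltac:(assumption) ltac:(assumption)).
  pose proof (d4_3 t l m ltac:(assumption) ltac:(assumption) ltac:(assumption) ltac:(assumption) ltac:(assumption) ltac:(assumption)).
  right; repeat split; lra.
Qed.

Lemma cert5 (t l m : R) : 0 < t -> t < 1 -> 0 < l -> l <= 1/4 -> 0 < m -> T1p t l m <= 0 ->
  (0 <= cross (Zp t l m 4) (Zp t l m 3) (Wp t l m 2) /\ 0 <= cross (RtoC 0) (Zp t l m 4) (Wp t l m 2) /\ 0 <= cross (RtoC 0) (Zp t l m 3) (Zp t l m 4) /\ 0 < cross (Zp t l m 4) (Zp t l m 3) (Wp t l m 2) + cross (RtoC 0) (Zp t l m 4) (Wp t l m 2) + cross (RtoC 0) (Zp t l m 3) (Zp t l m 4)) \/ (cross (Zp t l m 4) (Zp t l m 3) (Wp t l m 2) <= 0 /\ cross (RtoC 0) (Zp t l m 4) (Wp t l m 2) <= 0 /\ cross (RtoC 0) (Zp t l m 3) (Zp t l m 4) <= 0 /\ cross (Zp t l m 4) (Zp t l m 3) (Wp t l m 2) + cross (RtoC 0) (Zp t l m 4) (Wp t l m 2) + cross (RtoC 0) (Zp t l m 3) (Zp t l m 4) < 0).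
Proof.
  intros. pose proof (d5_1 t l m ltac:(assumption) ltac:(assumption) ltac:(assumption) ltac:(assumption) ltac:(assumption) ltac:(assumption)).
  pose proof (d5_2 t l m ltac:(assumption) ltac:(assumption) ltac:(assumption) ltac:(assumption) ltac:(assumption) ltac:(assumption)).
  pose proof (d5_3 t l m ltac:(assumption) ltac:(assumption) ltac:(assumption) ltac:(assumption) ltac:(assumption) ltac:(assumption)).
  right; repeat split; lra.
Qed.

Lemma cert6 (t l m : R) : 0 < t -> t < 1 -> 0 < l -> l <= 1/4 -> 0 < m -> T1p t l m <= 0 ->
  (0 <= cross (Wp t l m 3) (Wp t l m 2) (Zf t 2) /\ 0 <= cross (RtoC 1) (Wp t l m 3) (Zf t 2) /\ 0 <= cross (RtoC 1) (Wp t l m 2) (Wp t l m 3) /\ 0 < cross (Wp t l m 3) (Wp t l m 2) (Zf t 2) + cross (RtoC 1) (Wp t l m 3) (Zf t 2) + cross (RtoC 1) (Wp t l m 2) (Wp t l m 3)) \/ (cross (Wp t l m 3) (Wp t l m 2) (Zf t 2) <= 0 /\ cross (RtoC 1) (Wp t l m 3) (Zf t 2) <= 0 /\ cross (RtoC 1) (Wp t l m 2) (Wp t l m 3) <= 0 /\ cross (Wp t l m 3) (Wp t l m 2) (Zf t 2) + cross (RtoC 1) (Wp t l m 3) (Zf t 2) + cross (RtoC 1) (Wp t l m 2) (Wp t l m 3) < 0).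
Proof.
  intros. pose proof (d6_1 t l m ltac:(assumption) ltac:(assumption) ltac:(assumption) ltac:(assumption) ltac:(assumption) ltac:(assumption)).
  pose proof (d6_2 t l m ltac:(assumption) ltac:(assumption) ltac:(assumption) ltac:(assumption) ltac:(assumption) ltac:(assumption)).
  pose proof (d6_3 t l m ltac:(assumption) ltac:(assumption) ltac:(assumption) ltac:(assumption) ltac:(assumption) ltac:(assumption)).
  right; repeat split; lra.
Qed.

Lemma cert7 (t l m : R) : 0 < t -> t < 1 -> 0 < l -> l <= 1/4 -> 0 < m -> T1p t l m <= 0 ->
  (0 <= cross (Rr t l m 4) (RtoC 1) (Rr t l m 3) /\ 0 <= cross (RtoC 0) (Rr t l m 4) (Rr t l m 3) /\ 0 <= cross (RtoC 0) (RtoC 1) (Rr t l m 4) /\ 0 < cross (Rr t l m 4) (RtoC 1) (Rr t l m 3) + cross (RtoC 0) (Rr t l m 4) (Rr t l m 3) + cross (RtoC 0) (RtoC 1) (Rr t l m 4)) \/ (cross (Rr t l m 4) (RtoC 1) (Rr t l m 3) <= 0 /\ cross (RtoC 0) (Rr t l m 4) (Rr t l m 3) <= 0 /\ cross (RtoC 0) (RtoC 1) (Rr t l m 4) <= 0 /\ cross (Rr t l m 4) (RtoC 1) (Rr t l m 3) + cross (RtoC 0) (Rr t l m 4) (Rr t l m 3) + cross (RtoC 0) (RtoC 1) (Rr t l m 4) < 0).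
Proof.
  intros. pose proof (d7_1 t l m ltac:(assumption) ltac:(assumption) ltac:(assumption) ltac:(assumption) ltac:(assumption) ltac:(assumption)).
  pose proof (d7_2 t l m ltac:(assumption) ltac:(assumption) ltac:(assumption) ltac:(assumption) ltac:(assumption) ltac:(assumption)).
  pose proof (d7_3 t l m ltac:(assumption) ltac:(assumption) ltac:(assumption) ltac:(assumption) ltac:(assumption) ltac:(assumption)).
  left; repeat split; lra.
Qed.

Ltac vfacts t := assert (V1 : t*t <= 183/100) by nra;
  assert (V2 : 0 <= (t*t - 4/5) * (183/100 - t*t)) by nra.
Ltac vsolve := nra.
Definition G4 (t : R) : R := (1)*t*t*t*t*t*t*t*t + (16)*t*t*t*t*t*t + (10)*t*t*t*t + (-152)*t*t + (109).
Lemma e0_1 (t : R) : 0 < t -> 4/5 <= t*t -> (1+t*t)*(1+t*t) < 8 -> G4 t <= 0 ->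
  cross (RtoC 0) (Zf t 5) (Wf t 3) < 0.
Proof.
  intros ht0 hv0 hv1 hG. unfold G4 in hG. vfacts t.
  assert (HK : 0 < (1)*t/((3-t^2)*(5+t^2))^2) by kpos.
  assert (E : cross (RtoC 0) (Zf t 5) (Wf t 3) = ((1)*t/((3-t^2)*(5+t^2))^2) * ((37) + (-82)*t*t + (12)*t*t*t*t + (2)*t*t*t*t*t*t + (-1)*t*t*t*t*t*t*t*t)) by (cexp; field; nzt).
  rewrite E. clear E.
  assert (HR : ((37) + (-82)*t*t + (12)*t*t*t*t + (2)*t*t*t*t*t*t + (-1)*t*t*t*t*t*t*t*t) < 0) by vsolve.
  apply Rmult_pos_neg_lt; lra.
Qed.

Lemma e0_2 (t : R) : 0 < t -> 4/5 <= t*t -> (1+t*t)*(1+t*t) < 8 -> G4 t <= 0 ->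
  cross (Zf t 3) (RtoC 0) (Wf t 3) < 0.
Proof.
  intros ht0 hv0 hv1 hG. unfold G4 in hG. vfacts t.
  assert (HK : 0 < (2)*t*(3-t^2)*(3-t^2)*(5+t^2)/((3-t^2)*(5+t^2))^2) by kpos.
  assert (E : cross (Zf t 3) (RtoC 0) (Wf t 3) = ((2)*t*(3-t^2)*(3-t^2)*(5+t^2)/((3-t^2)*(5+t^2))^2) * ((-1))) by (cexp; field; nzt).
  rewrite E. clear E.
  assert (HR : ((-1)) < 0) by vsolve.
  apply Rmult_pos_neg_lt; lra.
Qed.

Lemma e0_3 (t : R) : 0 < t -> 4/5 <= t*t -> (1+t*t)*(1+t*t) < 8 -> G4 t <= 0 ->
  cross (Zf t 3) (Zf t 5) (RtoC 0) < 0.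
Proof.
  intros ht0 hv0 hv1 hG. unfold G4 in hG. vfacts t.
  assert (HK : 0 < (2)*(1+t^2)*(1+t^2)*(1+t^2)*t/((3-t^2)*(5+t^2))^2) by kpos.
  assert (E : cross (Zf t 3) (Zf t 5) (RtoC 0) = ((2)*(1+t^2)*(1+t^2)*(1+t^2)*t/((3-t^2)*(5+t^2))^2) * ((-1))) by (cexp; field; nzt).
  rewrite E. clear E.
  assert (HR : ((-1)) < 0) by vsolve.
  apply Rmult_pos_neg_lt; lra.
Qed.

Lemma f0 (t : R) : 0 < t -> 4/5 <= t*t -> (1+t*t)*(1+t*t) < 8 -> G4 t <= 0 -> (0 <= cross (RtoC 0) (Zf t 5) (Wf t 3) /\ 0 <= cross (Zf t 3) (RtoC 0) (Wf t 3) /\ 0 <= cross (Zf t 3) (Zf t 5) (RtoC 0) /\ 0 < cross (RtoC 0) (Zf t 5) (Wf t 3) + cross (Zf t 3) (RtoC 0) (Wf t 3) + cross (Zf t 3) (Zf t 5) (RtoC 0)) \/ (cross (RtoC 0) (Zf t 5) (Wf t 3) <= 0 /\ cross (Zf t 3) (RtoC 0) (Wf t 3) <= 0 /\ cross (Zf t 3) (Zf t 5) (RtoC 0) <= 0 /\ cross (RtoC 0) (Zf t 5) (Wf t 3) + cross (Zf t 3) (RtoC 0) (Wf t 3) + cross (Zf t 3) (Zf t 5) (RtoC 0) < 0).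
Proof.
  intros. pose proof (e0_1 t ltac:(assumption) ltac:(assumption) ltac:(assumption) ltac:(assumption)).
  pose proof (e0_2 t ltac:(assumption) ltac:(assumption) ltac:(assumption) ltac:(assumption)).
  pose proof (e0_3 t ltac:(assumption) ltac:(assumption) ltac:(assumption) ltac:(assumption)).
  right; repeat split; lra.
Qed.

Lemma e1_1 (t : R) : 0 < t -> 4/5 <= t*t -> (1+t*t)*(1+t*t) < 8 -> G4 t <= 0 ->
  cross (RtoC 1) (Wf t 1) (Wf t 4) < 0.
Proof.
  intros ht0 hv0 hv1 hG. unfold G4 in hG. vfacts t.
  assert (HK : 0 < (1/2)*(1+t^2)*(1+t^2)*(1+t^2)*t*(3-t^2)/((3-t^2)*(5+t^2))^2) by kpos.
  assert (E : cross (RtoC 1) (Wf t 1) (Wf t 4) = ((1/2)*(1+t^2)*(1+t^2)*(1+t^2)*t*(3-t^2)/((3-t^2)*(5+t^2))^2) * ((-1))) by (cexp; field; nzt).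
  rewrite E. clear E.
  assert (HR : ((-1)) < 0) by vsolve.
  apply Rmult_pos_neg_lt; lra.
Qed.

Lemma e1_2 (t : R) : 0 < t -> 4/5 <= t*t -> (1+t*t)*(1+t*t) < 8 -> G4 t <= 0 ->
  cross (Zf t 1) (RtoC 1) (Wf t 4) < 0.
Proof.
  intros ht0 hv0 hv1 hG. unfold G4 in hG. vfacts t.
  assert (HK : 0 < (1)*(1+t^2)*t*(3-t^2)/((3-t^2)*(5+t^2))^2) by kpos.
  assert (E : cross (Zf t 1) (RtoC 1) (Wf t 4) = ((1)*(1+t^2)*t*(3-t^2)/((3-t^2)*(5+t^2))^2) * ((3) + (-6)*t*t + (-1)*t*t*t*t)) by (cexp; field; nzt).
  rewrite E. clear E.
  assert (HR : ((3) + (-6)*t*t + (-1)*t*t*t*t) < 0) by vsolve.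
  apply Rmult_pos_neg_lt; lra.
Qed.

Lemma e1_3 (t : R) : 0 < t -> 4/5 <= t*t -> (1+t*t)*(1+t*t) < 8 -> G4 t <= 0 ->
  cross (Zf t 1) (Wf t 1) (RtoC 1) < 0.
Proof.
  intros ht0 hv0 hv1 hG. unfold G4 in hG. vfacts t.
  assert (HK : 0 < (2)*(1+t^2)*t*(3-t^2)*(5+t^2)/((3-t^2)*(5+t^2))^2) by kpos.
  assert (E : cross (Zf t 1) (Wf t 1) (RtoC 1) = ((2)*(1+t^2)*t*(3-t^2)*(5+t^2)/((3-t^2)*(5+t^2))^2) * ((-1))) by (cexp; field; nzt).
  rewrite E. clear E.
  assert (HR : ((-1)) < 0) by vsolve.
  apply Rmult_pos_neg_lt; lra.
Qed.

Lemma f1 (t : R) : 0 < t -> 4/5 <= t*t -> (1+t*t)*(1+t*t) < 8 -> G4 t <= 0 -> (0 <= cross (RtoC 1) (Wf t 1) (Wf t 4) /\ 0 <= cross (Zf t 1) (RtoC 1) (Wf t 4) /\ 0 <= cross (Zf t 1) (Wf t 1) (RtoC 1) /\ 0 < cross (RtoC 1) (Wf t 1) (Wf t 4) + cross (Zf t 1) (RtoC 1) (Wf t 4) + cross (Zf t 1) (Wf t 1) (RtoC 1)) \/ (cross (RtoC 1) (Wf t 1) (Wf t 4) <= 0 /\ cross (Zf t 1) (RtoC 1) (Wf t 4) <= 0 /\ cross (Zf t 1) (Wf t 1) (RtoC 1) <= 0 /\ cross (RtoC 1) (Wf t 1) (Wf t 4) + cross (Zf t 1) (RtoC 1) (Wf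 t 4) + cross (Zf t 1) (Wf t 1) (RtoC 1) < 0).
Proof.
  intros. pose proof (e1_1 t ltac:(assumption) ltac:(assumption) ltac:(assumption) ltac:(assumption)).
  pose proof (e1_2 t ltac:(assumption) ltac:(assumption) ltac:(assumption) ltac:(assumption)).
  pose proof (e1_3 t ltac:(assumption) ltac:(assumption) ltac:(assumption) ltac:(assumption)).
  right; repeat split; lra.
Qed.

Lemma e2_1 (t : R) : 0 < t -> 4/5 <= t*t -> (1+t*t)*(1+t*t) < 8 -> G4 t <= 0 ->
  cross (Wf t 0) (Zf t 4) (Wf t 3) < 0.
Proof.
  intros ht0 hv0 hv1 hG. unfold G4 in hG. vfacts t.
  assert (HK : 0 < (1)*(1+t^2)*(1+t^2)*(1+t^2)*(1+t^2)*t/((3-t^2)*(5+t^2))^2) by kpos.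
  assert (E : cross (Wf t 0) (Zf t 4) (Wf t 3) = ((1)*(1+t^2)*(1+t^2)*(1+t^2)*(1+t^2)*t/((3-t^2)*(5+t^2))^2) * ((-1))) by (cexp; field; nzt).
  rewrite E. clear E.
  assert (HR : ((-1)) < 0) by vsolve.
  apply Rmult_pos_neg_lt; lra.
Qed.

Lemma e2_2 (t : R) : 0 < t -> 4/5 <= t*t -> (1+t*t)*(1+t*t) < 8 -> G4 t <= 0 ->
  cross (Zf t 3) (Wf t 0) (Wf t 3) < 0.
Proof.
  intros ht0 hv0 hv1 hG. unfold G4 in hG. vfacts t.
  assert (HK : 0 < (1/2)*(1+t^2)*(1+t^2)*t*(3-t^2)*(5+t^2)/((3-t^2)*(5+t^2))^2) by kpos.
  assert (E : cross (Zf t 3) (Wf t 0) (Wf t 3) = ((1/2)*(1+t^2)*(1+t^2)*t*(3-t^2)*(5+t^2)/((3-t^2)*(5+t^2))^2) * ((-1))) by (cexp; field; nzt).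
  rewrite E. clear E.
  assert (HR : ((-1)) < 0) by vsolve.
  apply Rmult_pos_neg_lt; lra.
Qed.

Lemma e2_3 (t : R) : 0 < t -> 4/5 <= t*t -> (1+t*t)*(1+t*t) < 8 -> G4 t <= 0 ->
  cross (Zf t 3) (Zf t 4) (Wf t 0) < 0.
Proof.
  intros ht0 hv0 hv1 hG. unfold G4 in hG. vfacts t.
  assert (HK : 0 < (8)*(1+t^2)*t*(3-t^2)/((3-t^2)*(5+t^2))^2) by kpos.
  assert (E : cross (Zf t 3) (Zf t 4) (Wf t 0) = ((8)*(1+t^2)*t*(3-t^2)/((3-t^2)*(5+t^2))^2) * ((-1))) by (cexp; field; nzt).
  rewrite E. clear E.
  assert (HR : ((-1)) < 0) by vsolve.
  apply Rmult_pos_neg_lt; lra.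
Qed.

Lemma f2 (t : R) : 0 < t -> 4/5 <= t*t -> (1+t*t)*(1+t*t) < 8 -> G4 t <= 0 -> (0 <= cross (Wf t 0) (Zf t 4) (Wf t 3) /\ 0 <= cross (Zf t 3) (Wf t 0) (Wf t 3) /\ 0 <= cross (Zf t 3) (Zf t 4) (Wf t 0) /\ 0 < cross (Wf t 0) (Zf t 4) (Wf t 3) + cross (Zf t 3) (Wf t 0) (Wf t 3) + cross (Zf t 3) (Zf t 4) (Wf t 0)) \/ (cross (Wf t 0) (Zf t 4) (Wf t 3) <= 0 /\ cross (Zf t 3) (Wf t 0) (Wf t 3) <= 0 /\ cross (Zf t 3) (Zf t 4) (Wf t 0) <= 0 /\ cross (Wf t 0) (Zf t 4) (Wf t 3) + cross (Zf t 3) (Wf t 0) (Wf t 3) + cross (Zf t 3) (Zf t 4) (Wf t 0) < 0).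
Proof.
  intros. pose proof (e2_1 t ltac:(assumption) ltac:(assumption) ltac:(assumption) ltac:(assumption)).
  pose proof (e2_2 t ltac:(assumption) ltac:(assumption) ltac:(assumption) ltac:(assumption)).
  pose proof (e2_3 t ltac:(assumption) ltac:(assumption) ltac:(assumption) ltac:(assumption)).
  right; repeat split; lra.
Qed.

Lemma e3_1 (t : R) : 0 < t -> 4/5 <= t*t -> (1+t*t)*(1+t*t) < 8 -> G4 t <= 0 ->
  cross (Zf t 6) (Zf t 5) (Wf t 1) <= 0.
Proof.
  intros ht0 hv0 hv1 hG. unfold G4 in hG. vfacts t.
  assert (HK : 0 < (1/8)*(1+t^2)*t/((3-t^2)*(5+t^2))^2) by kpos.
  assert (E : cross (Zf t 6) (Zf t 5) (Wf t 1) = ((1/8)*(1+t^2)*t/((3-t^2)*(5+t^2))^2) * ((109) + (-152)*t*t + (10)*t*t*t*t + (16)*t*t*t*t*t*t + (1)*t*t*t*t*t*t*t*t)) by (cexp; field; nzt).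
  rewrite E. clear E.
  assert (HR : ((109) + (-152)*t*t + (10)*t*t*t*t + (16)*t*t*t*t*t*t + (1)*t*t*t*t*t*t*t*t) <= 0) by vsolve.
  apply Rmult_pos_neg_le; lra.
Qed.

Lemma e3_2 (t : R) : 0 < t -> 4/5 <= t*t -> (1+t*t)*(1+t*t) < 8 -> G4 t <= 0 ->
  cross (B0 t) (Zf t 6) (Wf t 1) < 0.
Proof.
  intros ht0 hv0 hv1 hG. unfold G4 in hG. vfacts t.
  assert (HK : 0 < (1/8)*(1+t^2)*t*(3-t^2)/((3-t^2)*(5+t^2))^2) by kpos.
  assert (E : cross (B0 t) (Zf t 6) (Wf t 1) = ((1/8)*(1+t^2)*t*(3-t^2)/((3-t^2)*(5+t^2))^2) * ((-281) + (77)*t*t + (37)*t*t*t*t + (-1)*t*t*t*t*t*t)) by (cexp; field; nzt).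
  rewrite E. clear E.
  assert (HR : ((-281) + (77)*t*t + (37)*t*t*t*t + (-1)*t*t*t*t*t*t) < 0) by vsolve.
  apply Rmult_pos_neg_lt; lra.
Qed.

Lemma e3_3 (t : R) : 0 < t -> 4/5 <= t*t -> (1+t*t)*(1+t*t) < 8 -> G4 t <= 0 ->
  cross (B0 t) (Zf t 5) (Zf t 6) < 0.
Proof.
  intros ht0 hv0 hv1 hG. unfold G4 in hG. vfacts t.
  assert (HK : 0 < (1/4)*(1+t^2)*(1+t^2)*t*(3-t^2)*(3-t^2)/((3-t^2)*(5+t^2))^2) by kpos.
  assert (E : cross (B0 t) (Zf t 5) (Zf t 6) = ((1/4)*(1+t^2)*(1+t^2)*t*(3-t^2)*(3-t^2)/((3-t^2)*(5+t^2))^2) * ((-3) + (-1)*t*t)) by (cexp; field; nzt).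
  rewrite E. clear E.
  assert (HR : ((-3) + (-1)*t*t) < 0) by vsolve.
  apply Rmult_pos_neg_lt; lra.
Qed.

Lemma f3 (t : R) : 0 < t -> 4/5 <= t*t -> (1+t*t)*(1+t*t) < 8 -> G4 t <= 0 -> (0 <= cross (Zf t 6) (Zf t 5) (Wf t 1) /\ 0 <= cross (B0 t) (Zf t 6) (Wf t 1) /\ 0 <= cross (B0 t) (Zf t 5) (Zf t 6) /\ 0 < cross (Zf t 6) (Zf t 5) (Wf t 1) + cross (B0 t) (Zf t 6) (Wf t 1) + cross (B0 t) (Zf t 5) (Zf t 6)) \/ (cross (Zf t 6) (Zf t 5) (Wf t 1) <= 0 /\ cross (B0 t) (Zf t 6) (Wf t 1) <= 0 /\ cross (B0 t) (Zf t 5) (Zf t 6) <= 0 /\ cross (Zf t 6) (Zf t 5) (Wf t 1) + cross (B0 t) (Zf t 6) (Wf t 1) + cross (B0 t) (Zf t 5) (Zf t 6) < 0).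
Proof.
  intros. pose proof (e3_1 t ltac:(assumption) ltac:(assumption) ltac:(assumption) ltac:(assumption)).
  pose proof (e3_2 t ltac:(assumption) ltac:(assumption) ltac:(assumption) ltac:(assumption)).
  pose proof (e3_3 t ltac:(assumption) ltac:(assumption) ltac:(assumption) ltac:(assumption)).
  right; repeat split; lra.
Qed.

Lemma e4_1 (t : R) : 0 < t -> 4/5 <= t*t -> (1+t*t)*(1+t*t) < 8 -> G4 t <= 0 ->
  cross (Wf t 5) (Zf t 3) (Wf t 4) < 0.
Proof.
  intros ht0 hv0 hv1 hG. unfold G4 in hG. vfacts t.
  assert (HK : 0 < (1/32)*(1+t^2)*(1+t^2)*t/((3-t^2)*(5+t^2))^2) by kpos.
  assert (E : cross (Wf t 5) (Zf t 3) (Wf t 4) = ((1/32)*(1+t^2)*(1+t^2)*t/((3-t^2)*(5+t^2))^2) * ((-181) + (80)*t*t + (-2)*t*t*t*t + (-8)*t*t*t*t*t*t + (-1)*t*t*t*t*t*t*t*t)) by (cexp; field; nzt).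
  rewrite E. clear E.
  assert (HR : ((-181) + (80)*t*t + (-2)*t*t*t*t + (-8)*t*t*t*t*t*t + (-1)*t*t*t*t*t*t*t*t) < 0) by vsolve.
  apply Rmult_pos_neg_lt; lra.
Qed.

Lemma e4_2 (t : R) : 0 < t -> 4/5 <= t*t -> (1+t*t)*(1+t*t) < 8 -> G4 t <= 0 ->
  cross (B0 t) (Wf t 5) (Wf t 4) <= 0.
Proof.
  intros ht0 hv0 hv1 hG. unfold G4 in hG. vfacts t.
  assert (HK : 0 < (1/32)*(1+t^2)*(1+t^2)*t/((3-t^2)*(5+t^2))^2) by kpos.
  assert (E : cross (B0 t) (Wf t 5) (Wf t 4) = ((1/32)*(1+t^2)*(1+t^2)*t/((3-t^2)*(5+t^2))^2) * ((109) + (-152)*t*t + (10)*t*t*t*t + (16)*t*t*t*t*t*t + (1)*t*t*t*t*t*t*t*t)) by (cexp; field; nzt).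
  rewrite E. clear E.
  assert (HR : ((109) + (-152)*t*t + (10)*t*t*t*t + (16)*t*t*t*t*t*t + (1)*t*t*t*t*t*t*t*t) <= 0) by vsolve.
  apply Rmult_pos_neg_le; lra.
Qed.

Lemma e4_3 (t : R) : 0 < t -> 4/5 <= t*t -> (1+t*t)*(1+t*t) < 8 -> G4 t <= 0 ->
  cross (B0 t) (Zf t 3) (Wf t 5) < 0.
Proof.
  intros ht0 hv0 hv1 hG. unfold G4 in hG. vfacts t.
  assert (HK : 0 < (1/8)*(1+t^2)*t/((3-t^2)*(5+t^2))^2) by kpos.
  assert (E : cross (B0 t) (Zf t 3) (Wf t 5) = ((1/8)*(1+t^2)*t/((3-t^2)*(5+t^2))^2) * ((-499) + (100)*t*t + (94)*t*t*t*t + (4)*t*t*t*t*t*t + (-3)*t*t*t*t*t*t*t*t)) by (cexp; field; nzt).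
  rewrite E. clear E.
  assert (HR : ((-499) + (100)*t*t + (94)*t*t*t*t + (4)*t*t*t*t*t*t + (-3)*t*t*t*t*t*t*t*t) < 0) by vsolve.
  apply Rmult_pos_neg_lt; lra.
Qed.

Lemma f4 (t : R) : 0 < t -> 4/5 <= t*t -> (1+t*t)*(1+t*t) < 8 -> G4 t <= 0 -> (0 <= cross (Wf t 5) (Zf t 3) (Wf t 4) /\ 0 <= cross (B0 t) (Wf t 5) (Wf t 4) /\ 0 <= cross (B0 t) (Zf t 3) (Wf t 5) /\ 0 < cross (Wf t 5) (Zf t 3) (Wf t 4) + cross (B0 t) (Wf t 5) (Wf t 4) + cross (B0 t) (Zf t 3) (Wf t 5)) \/ (cross (Wf t 5) (Zf t 3) (Wf t 4) <= 0 /\ cross (B0 t) (Wf t 5) (Wf t 4) <= 0 /\ cross (B0 t) (Zf t 3) (Wf t 5) <= 0 /\ cross (Wf t 5) (Zf t 3) (Wf t 4) + cross (B0 t) (Wf t 5) (Wf t 4) + cross (B0 t) (Zf t 3) (Wf t 5) < 0).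
Proof.
  intros. pose proof (e4_1 t ltac:(assumption) ltac:(assumption) ltac:(assumption) ltac:(assumption)).
  pose proof (e4_2 t ltac:(assumption) ltac:(assumption) ltac:(assumption) ltac:(assumption)).
  pose proof (e4_3 t ltac:(assumption) ltac:(assumption) ltac:(assumption) ltac:(assumption)).
  right; repeat split; lra.
Qed.

Lemma e5_1 (t : R) : 0 < t -> 4/5 <= t*t -> (1+t*t)*(1+t*t) < 8 -> G4 t <= 0 ->
  cross (Zf t 7) (Zf t 5) (Wf t 1) < 0.
Proof.
  intros ht0 hv0 hv1 hG. unfold G4 in hG. vfacts t.
  assert (HK : 0 < (2)*(1+t^2)*t/((3-t^2)*(5+t^2))^2) by kpos.
  assert (E : cross (Zf t 7) (Zf t 5) (Wf t 1) = ((2)*(1+t^2)*t/((3-t^2)*(5+t^2))^2) * ((11) + (-20)*t*t + (3)*t*t*t*t + (2)*t*t*t*t*t*t)) by (cexp; field; nzt).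
  rewrite E. clear E.
  assert (HR : ((11) + (-20)*t*t + (3)*t*t*t*t + (2)*t*t*t*t*t*t) < 0) by vsolve.
  apply Rmult_pos_neg_lt; lra.
Qed.

Lemma e5_2 (t : R) : 0 < t -> 4/5 <= t*t -> (1+t*t)*(1+t*t) < 8 -> G4 t <= 0 ->
  cross (Zf t 1) (Zf t 7) (Wf t 1) < 0.
Proof.
  intros ht0 hv0 hv1 hG. unfold G4 in hG. vfacts t.
  assert (HK : 0 < (1/8)*(1+t^2)*t*(3-t^2)*(5+t^2)/((3-t^2)*(5+t^2))^2) by kpos.
  assert (E : cross (Zf t 1) (Zf t 7) (Wf t 1) = ((1/8)*(1+t^2)*t*(3-t^2)*(5+t^2)/((3-t^2)*(5+t^2))^2) * ((-61) + (34)*t*t + (-1)*t*t*t*t)) by (cexp; field; nzt).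
  rewrite E. clear E.
  assert (HR : ((-61) + (34)*t*t + (-1)*t*t*t*t) < 0) by vsolve.
  apply Rmult_pos_neg_lt; lra.
Qed.

Lemma e5_3 (t : R) : 0 < t -> 4/5 <= t*t -> (1+t*t)*(1+t*t) < 8 -> G4 t <= 0 ->
  cross (Zf t 1) (Zf t 5) (Zf t 7) < 0.
Proof.
  intros ht0 hv0 hv1 hG. unfold G4 in hG. vfacts t.
  assert (HK : 0 < (1/8)*(1+t^2)*(1+t^2)*t*(3-t^2)*(3-t^2)/((3-t^2)*(5+t^2))^2) by kpos.
  assert (E : cross (Zf t 1) (Zf t 5) (Zf t 7) = ((1/8)*(1+t^2)*(1+t^2)*t*(3-t^2)*(3-t^2)/((3-t^2)*(5+t^2))^2) * ((-9) + (-1)*t*t)) by (cexp; field; nzt).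
  rewrite E. clear E.
  assert (HR : ((-9) + (-1)*t*t) < 0) by vsolve.
  apply Rmult_pos_neg_lt; lra.
Qed.

Lemma f5 (t : R) : 0 < t -> 4/5 <= t*t -> (1+t*t)*(1+t*t) < 8 -> G4 t <= 0 -> (0 <= cross (Zf t 7) (Zf t 5) (Wf t 1) /\ 0 <= cross (Zf t 1) (Zf t 7) (Wf t 1) /\ 0 <= cross (Zf t 1) (Zf t 5) (Zf t 7) /\ 0 < cross (Zf t 7) (Zf t 5) (Wf t 1) + cross (Zf t 1) (Zf t 7) (Wf t 1) + cross (Zf t 1) (Zf t 5) (Zf t 7)) \/ (cross (Zf t 7) (Zf t 5) (Wf t 1) <= 0 /\ cross (Zf t 1) (Zf t 7) (Wf t 1) <= 0 /\ cross (Zf t 1) (Zf t 5) (Zf t 7) <= 0 /\ cross (Zf t 7) (Zf t 5) (Wf t 1) + cross (Zf t 1) (Zf t 7) (Wf t 1) + cross (Zf t 1) (Zf t 5) (Zf t 7) < 0).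
Proof.
  intros. pose proof (e5_1 t ltac:(assumption) ltac:(assumption) ltac:(assumption) ltac:(assumption)).
  pose proof (e5_2 t ltac:(assumption) ltac:(assumption) ltac:(assumption) ltac:(assumption)).
  pose proof (e5_3 t ltac:(assumption) ltac:(assumption) ltac:(assumption) ltac:(assumption)).
  right; repeat split; lra.
Qed.

Lemma e6_1 (t : R) : 0 < t -> 4/5 <= t*t -> (1+t*t)*(1+t*t) < 8 -> G4 t <= 0 ->
  0 < cross (Wf t 6) (Wf t 4) (Wf t 0).
Proof.
  intros ht0 hv0 hv1 hG. unfold G4 in hG. vfacts t.
  assert (HK : 0 < (1/32)*(1+t^2)*(1+t^2)*(1+t^2)*t*(3-t^2)*(3-t^2)/((3-t^2)*(5+t^2))^2) by kpos.
  assert (E : cross (Wf t 6) (Wf t 4) (Wf t 0) = ((1/32)*(1+t^2)*(1+t^2)*(1+t^2)*t*(3-t^2)*(3-t^2)/((3-t^2)*(5+t^2))^2) * ((9) + (1)*t*t)) by (cexp; field; nzt).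
  rewrite E. clear E.
  assert (HR : 0 < ((9) + (1)*t*t)) by vsolve.
  apply Rmult_lt_0_compat; lra.
Qed.

Lemma e6_2 (t : R) : 0 < t -> 4/5 <= t*t -> (1+t*t)*(1+t*t) < 8 -> G4 t <= 0 ->
  0 < cross (B0 t) (Wf t 6) (Wf t 0).
Proof.
  intros ht0 hv0 hv1 hG. unfold G4 in hG. vfacts t.
  assert (HK : 0 < (1/32)*(1+t^2)*(1+t^2)*t*(3-t^2)*(5+t^2)/((3-t^2)*(5+t^2))^2) by kpos.
  assert (E : cross (B0 t) (Wf t 6) (Wf t 0) = ((1/32)*(1+t^2)*(1+t^2)*t*(3-t^2)*(5+t^2)/((3-t^2)*(5+t^2))^2) * ((61) + (-34)*t*t + (1)*t*t*t*t)) by (cexp; field; nzt).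
  rewrite E. clear E.
  assert (HR : 0 < ((61) + (-34)*t*t + (1)*t*t*t*t)) by vsolve.
  apply Rmult_lt_0_compat; lra.
Qed.

Lemma e6_3 (t : R) : 0 < t -> 4/5 <= t*t -> (1+t*t)*(1+t*t) < 8 -> G4 t <= 0 ->
  0 < cross (B0 t) (Wf t 4) (Wf t 6).
Proof.
  intros ht0 hv0 hv1 hG. unfold G4 in hG. vfacts t.
  assert (HK : 0 < (1/2)*(1+t^2)*(1+t^2)*t/((3-t^2)*(5+t^2))^2) by kpos.
  assert (E : cross (B0 t) (Wf t 4) (Wf t 6) = ((1/2)*(1+t^2)*(1+t^2)*t/((3-t^2)*(5+t^2))^2) * ((-11) + (20)*t*t + (-3)*t*t*t*t + (-2)*t*t*t*t*t*t)) by (cexp; field; nzt).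
  rewrite E. clear E.
  assert (HR : 0 < ((-11) + (20)*t*t + (-3)*t*t*t*t + (-2)*t*t*t*t*t*t)) by vsolve.
  apply Rmult_lt_0_compat; lra.
Qed.

Lemma f6 (t : R) : 0 < t -> 4/5 <= t*t -> (1+t*t)*(1+t*t) < 8 -> G4 t <= 0 -> (0 <= cross (Wf t 6) (Wf t 4) (Wf t 0) /\ 0 <= cross (B0 t) (Wf t 6) (Wf t 0) /\ 0 <= cross (B0 t) (Wf t 4) (Wf t 6) /\ 0 < cross (Wf t 6) (Wf t 4) (Wf t 0) + cross (B0 t) (Wf t 6) (Wf t 0) + cross (B0 t) (Wf t 4) (Wf t 6)) \/ (cross (Wf t 6) (Wf t 4) (Wf t 0) <= 0 /\ cross (B0 t) (Wf t 6) (Wf t 0) <= 0 /\ cross (B0 t) (Wf t 4) (Wf t 6) <= 0 /\ cross (Wf t 6) (Wf t 4) (Wf t 0) + cross (B0 t) (Wf t 6) (Wf t 0) + cross (B0 t) (Wf t 4) (Wf t 6) < 0).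
Proof.
  intros. pose proof (e6_1 t ltac:(assumption) ltac:(assumption) ltac:(assumption) ltac:(assumption)).
  pose proof (e6_2 t ltac:(assumption) ltac:(assumption) ltac:(assumption) ltac:(assumption)).
  pose proof (e6_3 t ltac:(assumption) ltac:(assumption) ltac:(assumption) ltac:(assumption)).
  left; repeat split; lra.
Qed.

Lemma e7_1 (t : R) : 0 < t -> 4/5 <= t*t -> (1+t*t)*(1+t*t) < 8 -> G4 t <= 0 ->
  cross (Cpow (aC t) 7) (Cpow (aC t) 2) (Cpow (aC t) 6) < 0.
Proof.
  intros ht0 hv0 hv1 hG. unfold G4 in hG. vfacts t.
  assert (HK : 0 < (1/8192)*(1+t^2)*(1+t^2)*(1+t^2)*t) by kpos.
  assert (E : cross (Cpow (aC t) 7) (Cpow (aC t) 2) (Cpow (aC t) 6) = ((1/8192)*(1+t^2)*(1+t^2)*(1+t^2)*t) * ((-49) + (13)*t*t + (-3)*t*t*t*t + (-1)*t*t*t*t*t*t)) by (cexp; field; nzt).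
  rewrite E. clear E.
  assert (HR : ((-49) + (13)*t*t + (-3)*t*t*t*t + (-1)*t*t*t*t*t*t) < 0) by vsolve.
  apply Rmult_pos_neg_lt; lra.
Qed.

Lemma e7_2 (t : R) : 0 < t -> 4/5 <= t*t -> (1+t*t)*(1+t*t) < 8 -> G4 t <= 0 ->
  cross (RtoC 1) (Cpow (aC t) 7) (Cpow (aC t) 6) < 0.
Proof.
  intros ht0 hv0 hv1 hG. unfold G4 in hG. vfacts t.
  assert (HK : 0 < (1/8192)*(1+t^2)*t*(3-t^2)) by kpos.
  assert (E : cross (RtoC 1) (Cpow (aC t) 7) (Cpow (aC t) 6) = ((1/8192)*(1+t^2)*t*(3-t^2)) * ((107) + (-176)*t*t + (-34)*t*t*t*t + (-8)*t*t*t*t*t*t + (-1)*t*t*t*t*t*t*t*t)) by (cexp; field; nzt).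
  rewrite E. clear E.
  assert (HR : ((107) + (-176)*t*t + (-34)*t*t*t*t + (-8)*t*t*t*t*t*t + (-1)*t*t*t*t*t*t*t*t) < 0) by vsolve.
  apply Rmult_pos_neg_lt; lra.
Qed.

Lemma e7_3 (t : R) : 0 < t -> 4/5 <= t*t -> (1+t*t)*(1+t*t) < 8 -> G4 t <= 0 ->
  cross (RtoC 1) (Cpow (aC t) 2) (Cpow (aC t) 7) < 0.
Proof.
  intros ht0 hv0 hv1 hG. unfold G4 in hG. vfacts t.
  assert (HK : 0 < (1/512)*(1+t^2)*t) by kpos.
  assert (E : cross (RtoC 1) (Cpow (aC t) 2) (Cpow (aC t) 7) = ((1/512)*(1+t^2)*t) * ((-233) + (93)*t*t + (5)*t*t*t*t + (-1)*t*t*t*t*t*t)) by (cexp; field; nzt).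
  rewrite E. clear E.
  assert (HR : ((-233) + (93)*t*t + (5)*t*t*t*t + (-1)*t*t*t*t*t*t) < 0) by vsolve.
  apply Rmult_pos_neg_lt; lra.
Qed.

Lemma f7 (t : R) : 0 < t -> 4/5 <= t*t -> (1+t*t)*(1+t*t) < 8 -> G4 t <= 0 -> (0 <= cross (Cpow (aC t) 7) (Cpow (aC t) 2) (Cpow (aC t) 6) /\ 0 <= cross (RtoC 1) (Cpow (aC t) 7) (Cpow (aC t) 6) /\ 0 <= cross (RtoC 1) (Cpow (aC t) 2) (Cpow (aC t) 7) /\ 0 < cross (Cpow (aC t) 7) (Cpow (aC t) 2) (Cpow (aC t) 6) + cross (RtoC 1) (Cpow (aC t) 7) (Cpow (aC t) 6) + cross (RtoC 1) (Cpow (aC t) 2) (Cpow (aC t) 7)) \/ (cross (Cpow (aC t) 7) (Cpow (aC t) 2) (Cpow (aC t) 6) <= 0 /\ cross (RtoC 1) (Cpow (aC t) 7) (Cpow (aC t) 6) <= 0 /\ cross (RtoC 1) (Cpow (aC t) 2) (Cpow (aC t) 7) <= 0 /\ cross (Cpow (aC t) 7) (Cpow (aC t) 2) (Cpow (aC t) 6) + cross (RtoC 1) (Cpow (aC t) 7) (Cpow (aC t) 6) + cross (RtoC 1) (Cpow (aC t) 2) (Cpow (aC t) 7) < 0).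
Proof.
  intros. pose proof (e7_1 t ltac:(assumption) ltac:(assumption) ltac:(assumption) ltac:(assumption)).
  pose proof (e7_2 t ltac:(assumption) ltac:(assumption) ltac:(assumption) ltac:(assumption)).
  pose proof (e7_3 t ltac:(assumption) ltac:(assumption) ltac:(assumption) ltac:(assumption)).
  right; repeat split; lra.
Qed.

Section Setup.
Variable eta : R.
Hypothesis heta0 : 0 < eta.
Hypothesis heta1 : eta < PI/3.

Let co := cos eta.
Let si := sin eta.

Lemma co_pos : 1/2 < co.
Proof.
  unfold co. rewrite <- cos_PI3. pose proof PI_RGT_0. apply cos_decreasing_1; lra.
Qed.

Lemma si_pos : 0 < si.
Proof. unfold si. apply sin_gt_0; auto. pose proof PI_RGT_0; lra. Qed.

Lemma pyth : si^2 + co^2 = 1.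
Proof. unfold si, co. rewrite <- (sin2_cos2 eta). unfold Rsqr. ring. Qed.

Definition Aeta := / (2 * cos eta).

Lemma a_eq : a_of eta = aC (sin eta / cos eta).
Proof.
  pose proof co_pos. unfold a_of, cexpi, aC. rewrite cos_neg, sin_neg.
  unfold Cmult, RtoC; simpl. fold co si. f_equal; field; lra.
Qed.

Lemma a_eq2 : a_of eta = (co * Aeta, - (si * Aeta)).
Proof.
  pose proof co_pos. rewrite a_eq. unfold aC, Aeta. fold co si. f_equal; field; lra.
Qed.

Lemma Cmod_a : Cmod (a_of eta) = Aeta.
Proof.
  pose proof co_pos. pose proof pyth. rewrite a_eq2. unfold Cmod; cbn [fst snd].
  replace ((co * Aeta) ^ 2 + (- (si * Aeta)) ^ 2) with (Aeta ^ 2) by (transitivity ((si^2+co^2)*Aeta^2); [rewrite H0; ring| ring]).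
  rewrite <- sqrt_pow2 with (x := Aeta) at 2; [f_equal; ring|].
  unfold Aeta. left. apply Rinv_0_lt_compat. fold co. lra.
Qed.

Lemma A2 : Aeta ^ 2 = qq (si / co).
Proof.
  pose proof co_pos. pose proof pyth. unfold Aeta, qq. fold co.
  field_simplify; [|lra|lra]. rewrite <- H0. field. lra.
Qed.

Lemma t2_lt3 : (si/co)^2 < 3.
Proof.
  pose proof co_pos. pose proof pyth.
  replace ((si/co)^2) with (si^2/co^2) by (field; lra).
  apply Rmult_lt_reg_r with (co^2). nra.
  field_simplify; [|lra]. nra.
Qed.

Lemma c_eq : c_of eta = cc (si / co).
Proof.
  pose proof co_pos. pose proof t2_lt3. unfold c_of. rewrite Cmod_a.
  replace (Aeta ^ 4) with ((Aeta^2)^2) by ring. rewrite A2. unfold qq, cc.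
  set (t := si/co) in *. field. split; nra.
Qed.

Lemma cq_eq : c_of eta * Cmod (a_of eta) ^ 2 = cc (si/co) * qq (si/co).
Proof. rewrite c_eq, Cmod_a, A2. reflexivity. Qed.

Lemma cq2_eq : c_of eta * Cmod (a_of eta) ^ 4 = cc (si/co) * qq (si/co) ^ 2.
Proof. rewrite c_eq, Cmod_a. replace (Aeta^4) with ((Aeta^2)^2) by ring. rewrite A2. reflexivity. Qed.

Lemma z_eq j : z_of eta j = Zf (si/co) (S j).
Proof. unfold z_of, Zf. rewrite c_eq, a_eq. reflexivity. Qed.

Lemma w_eq j : w_of eta j = Wf (si/co) j.
Proof. unfold w_of, Wf. rewrite cq_eq, a_eq. reflexivity. Qed.

Lemma b0_eq : b0_of eta = B0 (si/co).
Proof. unfold b0_of, B0. rewrite cq2_eq, a_eq. reflexivity. Qed.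

Lemma demoivre n : Cpow (a_of eta) n = (Aeta ^ n * cos (INR n * eta), - (Aeta ^ n * sin (INR n * eta))).
Proof.
  induction n as [|n IH].
  - simpl. rewrite Rmult_0_l, cos_0, sin_0. unfold RtoC. f_equal; ring.
  - rewrite Cpow_S, IH, a_eq2, S_INR.
    replace ((INR n + 1) * eta) with (INR n * eta + eta) by ring.
    rewrite cos_plus, sin_plus. fold co si. unfold Cmult; simpl. f_equal; ring.
Qed.

End Setup.

Definition Efun (t U W : R) : R :=
  -(1-(qq t)^2)*(W - t*U)/2 + (qq t)^2*W + qq t * t*(U^2+W^2)/2.

Lemma phi_E (eta : R) (n : nat) : 0 < eta -> eta < PI/3 -> (1 <= n)%nat ->
  Aeta eta ^ n * Phi (S n) eta =
  Efun (sin eta / cos eta) (fst (Cpow (a_of eta) (n-1))) (snd (Cpow (a_of eta) (n-1))).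
Proof.
  intros h0 h1 hn.
  pose proof (co_pos eta h0 h1) as hc. pose proof (pyth eta) as hp.
  rewrite (demoivre eta h0 h1). cbn [fst snd].
  unfold Phi, Efun. rewrite (Cmod_a eta h0 h1). rewrite <- (A2 eta h0 h1).
  replace (INR (S n) - 1) with (INR n) by (rewrite S_INR; ring).
  replace (INR (S n) - 2) with (INR (n-1)) by (rewrite minus_INR by lia; rewrite (S_INR n); change (INR 1) with 1; ring).
  replace (INR n * eta) with (INR (n-1) * eta + eta) by (rewrite minus_INR by lia; change (INR 1) with 1; ring).
  rewrite sin_plus.
  set (th := INR (n-1) * eta).
  replace n with (S (n-1)) at 1 by lia.
  replace (S n) with (S (S (n-1))) by lia.
  set (B := Aeta eta ^ (n-1)).
  assert (hcs : sin th ^ 2 + cos th ^ 2 = 1) by (rewrite <- (sin2_cos2 th); unfold Rsqr; ring).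
  replace ((B * cos th) ^ 2 + (- (B * sin th)) ^ 2) with (B^2) by (transitivity (B^2 * (sin th ^ 2 + cos th ^ 2)); [rewrite hcs; ring| ring]).
  replace (Aeta eta ^ S (n-1)) with (Aeta eta * B) by (unfold B; simpl; ring).
  replace (Aeta eta ^ S (S (n-1))) with (Aeta eta ^ 2 * B) by (unfold B; simpl; ring).
  clearbody B th. unfold Aeta. field. lra.
Qed.

Lemma sin_diff_lb x y : 0 <= y -> y <= x -> x <= PI/2 -> (x - y) * cos x <= sin x - sin y.
Proof.
  intros h0 h1 h2. destruct (Req_dec x y) as [->|hne]; [rewrite Rminus_diag; lra|].
  destruct (MVT_cor2 sin cos y x) as [c [hc1 hc2]]; [lra| intros; apply derivable_pt_lim_sin|].
  rewrite hc1. pose proof PI_RGT_0.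
  assert (cos x <= cos c) by (left; apply cos_decreasing_1; lra). nra.
Qed.

Lemma cos_diff_ub x y : 0 <= x -> x <= y -> y <= PI/2 -> cos x - cos y <= (y - x) * sin y.
Proof.
  intros h0 h1 h2. destruct (Req_dec x y) as [->|hne]; [rewrite !Rminus_diag; lra|].
  destruct (MVT_cor2 cos (fun u => - sin u) x y) as [c [hc1 hc2]]; [lra| intros; apply derivable_pt_lim_cos|].
  pose proof PI_RGT_0.
  assert (sin c <= sin y) by (left; apply sin_increasing_1; lra). nra.
Qed.

Lemma pow_diff a b n : 0 <= a -> a <= b -> b^n - a^n <= INR n * b^(n-1) * (b - a).
Proof.
  intros ha hab. induction n as [|n IH].
  - simpl. lra.
  - rewrite S_INR. simpl pow. replace (S n - 1)%nat with n by lia.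
    destruct n as [|n].
    + simpl. lra.
    + replace (S n - 1)%nat with n in IH by lia. simpl pow in *.
      assert (0 <= a ^ n) by (apply pow_le; lra).
      assert (a ^ n <= b ^ n) by (apply pow_incr; lra).
      assert (0 <= INR (S n)) by (apply pos_INR).
      assert (Q1 : b * (b*b^n - a*a^n) <= b * (INR (S n) * b^n * (b-a))) by (apply Rmult_le_compat_l; lra).
      assert (Q2 : a*a^n <= b*b^n) by nra.
      assert (Q3 : a*a^n*(b-a) <= b*b^n*(b-a)) by (apply Rmult_le_compat_r; lra).
      nra.
Qed.

Lemma pow_le1 x n : 0 <= x -> x <= 1 -> x^n <= 1.
Proof. intros h0 h1. induction n; simpl; [lra|]. assert (0 <= x^n) by (apply pow_le; lra). nra. Qed.

Lemma pow_le_small x n m : 0 <= x -> x <= 1 -> (m <= n)%nat -> x^n <= x^m.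
Proof.
  intros h0 h1 hmn. replace n with (m + (n - m))%nat by lia. rewrite pow_add.
  assert (0 <= x^m) by (apply pow_le; lra).
  assert (x^(n-m) <= 1) by (apply pow_le1; lra). nra.
Qed.

Lemma cos2_ge x : 0 <= x -> x <= PI/4 -> 1/2 <= cos x ^ 2 /\ 0 < cos x.
Proof.
  intros h0 h1. pose proof PI_RGT_0.
  assert (hc : cos (PI/4) <= cos x).
  { destruct (Req_dec x (PI/4)) as [->|hne]; [lra|]. left. apply cos_decreasing_1; lra. }
  rewrite cos_PI4 in hc.
  assert (hs : sqrt 2 * sqrt 2 = 2) by (apply sqrt_sqrt; lra).
  assert (hs0 : 0 < sqrt 2) by (apply sqrt_lt_R0; lra).
  assert (1 / sqrt 2 * (1 / sqrt 2) = 1/2) by (replace (1 / sqrt 2 * (1 / sqrt 2)) with (1 / (sqrt 2 * sqrt 2)) by (field; lra); rewrite hs; lra).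
  assert (0 < 1 / sqrt 2) by (apply Rdiv_lt_0_compat; lra).
  split; nra.
Qed.

Definition Xf (A : R) := 1 - A^4 - A^2/2.

Lemma phi_rewrite (k : nat) (x : R) : 0 < x -> x < PI/3 -> (2 <= k)%nat ->
  Phi (S k) x = Xf (Aeta x) * sin (INR k * x) + Aeta x ^ 3 * (sin x * cos (INR k * x) + Aeta x ^ (k-2) * sin x).
Proof.
  intros h0 h1 hk. pose proof (co_pos x h0 h1) as hc.
  unfold Phi, Xf. rewrite (Cmod_a x h0 h1).
  replace (INR (S k) - 1) with (INR k) by (rewrite S_INR; ring).
  replace ((INR (S k) - 2) * x) with (INR k * x - x) by (rewrite S_INR; ring).
  rewrite sin_minus.
  replace (Aeta x ^ S k) with (Aeta x ^ 3 * Aeta x ^ (k-2)) by (rewrite <- pow_add; f_equal; lia).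
  unfold Aeta. field. lra.
Qed.

Lemma Aprops (x : R) : 0 < x -> x <= PI/4 ->
  0 < Aeta x /\ Aeta x ^ 2 <= 1/2 /\ Aeta x <= 1 /\ 1/2 <= Xf (Aeta x) /\ Aeta x ^ 3 <= Xf (Aeta x) /\ 0 < cos x.
Proof.
  intros h0 h1. destruct (cos2_ge x) as [hc2 hc]; try lra.
  assert (hA : 0 < Aeta x) by (unfold Aeta; apply Rinv_0_lt_compat; lra).
  assert (hA2 : Aeta x ^ 2 <= 1/2).
  { unfold Aeta. replace ((/ (2 * cos x)) ^ 2) with (/ (4 * cos x ^ 2)) by (field; lra).
    apply Rmult_le_reg_l with (4 * cos x ^2); [nra|]. rewrite Rinv_r by nra. nra. }
  assert (hA1 : Aeta x <= 1) by nra.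
  unfold Xf. repeat split; try lra; nra.
Qed.

Lemma phi_neg (k : nat) (e1 x : R) :
  (5 <= k)%nat -> PI / INR (S k) < e1 -> e1 < PI / INR k -> Phi (S k) e1 = 0 ->
  e1 <= x -> x < PI / (INR k - 1) -> Phi (S k) x <= 0.
Proof.
  intros hk h1 h2 hz h3 h4.
  assert (hK : 5 <= INR k) by (replace 5 with (INR 5) by (simpl; ring); apply le_INR; lia).
  rewrite S_INR in h1. set (K := INR k) in *.
  pose proof PI_RGT_0 as hpi.
  assert (hb4 : PI / (K - 1) <= PI / 4).
  { apply Rmult_le_compat_l; [lra|]. apply Rinv_le_contravar; lra. }
  assert (he1 : 0 < e1) by (apply Rlt_trans with (PI / (K+1)); [apply Rdiv_lt_0_compat; lra| exact h1]).
  assert (hx4 : x < PI/4) by lra.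
  assert (hk2 : (2 <= k)%nat) by lia.
  rewrite (phi_rewrite k x) by (lra || lia). rewrite (phi_rewrite k e1) in hz by (lra || lia).
  fold K in hz |- *.
  destruct (Aprops x) as [hA [hA2 [hA1 [hX [hAX hc]]]]]; try lra.
  destruct (Aprops e1) as [hA' [hA2' [hA1' [hX' [hAX' hc']]]]]; try lra.
  assert (hs : 0 < sin x) by (apply sin_gt_0; lra).
  assert (hs' : 0 < sin e1) by (apply sin_gt_0; lra).
  assert (hsx1 : sin x <= 1) by (pose proof (SIN_bound x); lra).
  assert (hpk : Aeta x ^ (k-2) <= Aeta x ^ 2) by (apply pow_le_small; lra || lia).
  destruct (Rle_lt_dec (PI / K) x) as [hbig|hsmall].
  -
    set (y := K * x - PI).
    assert (hy0 : 0 <= y).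
    { unfold y. apply Rmult_le_compat_l with (r := K) in hbig; [|lra].
      replace (K * (PI / K)) with PI in hbig by (field; lra). lra. }
    assert (hy1 : y < PI / 4).
    { unfold y. apply Rmult_lt_compat_l with (r := K) in h4; [|lra].
      replace (K * (PI / (K - 1))) with (PI + PI / (K-1)) in h4 by (field; lra). lra. }
    replace (K * x) with (y + PI) by (unfold y; ring).
    rewrite neg_sin, neg_cos.
    assert (hsy : 0 <= sin y) by (apply sin_ge_0; lra).
    assert (hcy : 1/2 <= cos y).
    { rewrite <- cos_PI3. destruct (Req_dec y 0) as [->|hne]; [rewrite cos_0; rewrite cos_PI3; lra|].
      left. apply cos_decreasing_1; lra. }
    assert (h3p : 0 <= Aeta x ^ 3) by (apply pow_le; lra).
    assert (- cos y + Aeta x ^ (k-2) <= 0) by lra.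
    assert (Aeta x ^ 3 * (sin x * - cos y + Aeta x ^ (k - 2) * sin x) <= 0).
    { replace (sin x * - cos y + Aeta x ^ (k - 2) * sin x) with (sin x * (- cos y + Aeta x ^ (k-2))) by ring.
      assert (0 <= Aeta x ^ 3 * sin x) by nra. nra. }
    nra.
  - set (p1 := PI - K * e1). set (p2 := PI - K * x).
    assert (hp2 : 0 < p2).
    { unfold p2. apply Rmult_lt_compat_l with (r := K) in hsmall; [|lra].
      replace (K * (PI / K)) with PI in hsmall by (field; lra). lra. }
    assert (hp12 : p2 <= p1) by (unfold p1, p2; nra).
    assert (hp1 : p1 < PI / 6).
    { unfold p1. apply Rmult_lt_compat_l with (r := K) in h1; [|lra].
      replace (K * (PI / (K + 1))) with (PI - PI / (K+1)) in h1 by (field; lra).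
      assert (PI / (K+1) <= PI / 6).
      { apply Rmult_le_compat_l; [lra|]. apply Rinv_le_contravar; lra. }
      lra. }
    replace (K * e1) with (PI - p1) in hz by (unfold p1; ring).
    replace (K * x) with (PI - p2) by (unfold p2; ring).
    rewrite sin_PI_x, Rtrigo_facts.cos_pi_minus in hz |- *.
    set (A1 := Aeta e1) in *. set (A2 := Aeta x) in *.
    set (s1 := sin e1) in *. set (s2 := sin x) in *.
    assert (hco : cos x <= cos e1).
    { destruct (Req_dec e1 x) as [->|hne]; [lra|]. left; apply cos_decreasing_1; lra. }
    assert (hAA : A1 <= A2).
    { unfold A1, A2, Aeta. apply Rinv_le_contravar; nra. }
    assert (hs12 : s1 <= s2).
    { unfold s1, s2. destruct (Req_dec e1 x) as [->|hne]; [lra|]. left; apply sin_increasing_1; lra. }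
    assert (hsin : (p1 - p2) * cos p1 <= sin p1 - sin p2) by (apply sin_diff_lb; lra).
    assert (hcp1 : 1/2 <= cos p1).
    { rewrite <- cos_PI3. left. apply cos_decreasing_1; lra. }
    assert (hcp : cos p1 <= cos p2).
    { destruct (Req_dec p1 p2) as [->|hne]; [lra|]. left; apply cos_decreasing_1; lra. }
    assert (hsp1 : 0 < sin p1) by (apply sin_gt_0; lra).
    assert (hsp2 : 0 < sin p2) by (apply sin_gt_0; lra).
    assert (hpd : A2^(k-2) - A1^(k-2) <= INR (k-2) * A2^(k-2-1) * (A2 - A1)) by (apply pow_diff; lra).
    replace (k-2-1)%nat with (k-3)%nat in hpd by lia.
    rewrite minus_INR in hpd by lia. replace (INR 2) with 2 in hpd by (simpl; ring). fold K in hpd.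
    assert (hA3 : A2^(k-3) <= 1/2).
    { assert (A2^(k-3) <= A2^2) by (apply pow_le_small; lra || lia). lra. }
    assert (hAd : A2 - A1 <= cos e1 - cos x).
    { unfold A1, A2, Aeta.
      replace (/ (2 * cos x) - / (2 * cos e1)) with ((cos e1 - cos x) / (2 * cos x * cos e1)) by (field; lra).
      destruct (cos2_ge x) as [cx2 _]; try lra. destruct (cos2_ge e1) as [ce2 _]; try lra.
      assert (hpr : 1/4 <= (cos x * cos e1)^2) by (replace ((cos x * cos e1)^2) with (cos x ^2 * cos e1^2) by ring; nra).
      assert (1 <= 2 * cos x * cos e1) by nra.
      apply Rmult_le_reg_r with (2 * cos x * cos e1); [nra|].
      unfold Rdiv. rewrite Rmult_assoc, Rinv_l by nra. nra. }
    assert (hcd : cos e1 - cos x <= (x - e1) * s2) by (apply cos_diff_ub; lra).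
    assert (hpp : p1 - p2 = K * (x - e1)) by (unfold p1, p2; ring).
    assert (hA1p : 0 < A1 ^ 3) by (apply pow_lt; lra).
    assert (hA2p : 0 < A2 ^ 3) by (apply pow_lt; lra).
    set (K1 := Xf A1 / A1^3). set (K2 := Xf A2 / A2^3).
    set (r1 := sin p1 / s1). set (r2 := sin p2 / s2).
    assert (hG1 : K1 * r1 - cos p1 + A1^(k-2) = 0).
    { unfold K1, r1. apply Rmult_eq_reg_l with (A1^3 * s1); [|nra].
      rewrite Rmult_0_r. rewrite <- hz. field. lra. }
    assert (hgoal : Xf A2 * sin p2 + A2 ^ 3 * (s2 * - cos p2 + A2 ^ (k - 2) * s2) = A2^3 * s2 * (K2 * r2 - cos p2 + A2^(k-2))).
    { unfold K2, r2. field. lra. }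
    rewrite hgoal.
    assert (hK12 : K2 <= K1).
    { unfold K1, K2, Xf.
      assert (hN : 0 <= (A2 - A1) * (A2^2 + A1*A2 + A1^2 + A1^3*A2^3 - A1^2*A2^2/2)).
      { apply Rmult_le_pos; [lra|]. assert (0 <= A1^3*A2^3) by (apply Rmult_le_pos; lra). nra. }
      apply Rmult_le_reg_r with (A1^3 * A2^3); [nra|].
      replace ((1 - A2 ^ 4 - A2 ^ 2 / 2) / A2 ^ 3 * (A1 ^ 3 * A2 ^ 3)) with ((1 - A2 ^ 4 - A2 ^ 2 / 2) * A1^3) by (field; lra).
      replace ((1 - A1 ^ 4 - A1 ^ 2 / 2) / A1 ^ 3 * (A1 ^ 3 * A2 ^ 3)) with ((1 - A1 ^ 4 - A1 ^ 2 / 2) * A2^3) by (field; lra).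
      nra. }
    assert (hK2 : 1 <= K2).
    { unfold K2. apply Rmult_le_reg_r with (A2^3); [lra|]. unfold Rdiv. rewrite Rmult_assoc, Rinv_l by lra. lra. }
    assert (hr1 : 0 <= r1) by (unfold r1; apply Rmult_le_pos; [lra| left; apply Rinv_0_lt_compat; lra]).
    assert (hr1b : sin p1 / s2 <= r1).
    { unfold r1. apply Rmult_le_compat_l; [lra|]. apply Rinv_le_contravar; lra. }
    assert (hr2 : r2 - sin p1 / s2 <= - (K * (x - e1)) / (2 * s2)).
    { unfold r2. replace (sin p2 / s2 - sin p1 / s2) with ((sin p2 - sin p1) / s2) by (field; lra).
      apply Rmult_le_reg_r with (2 * s2); [lra|].
      replace ((sin p2 - sin p1) / s2 * (2 * s2)) with (2 * (sin p2 - sin p1)) by (field; lra).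
      replace (- (K * (x - e1)) / (2 * s2) * (2 * s2)) with (- (K * (x - e1))) by (field; lra).
      rewrite <- hpp. nra. }
    assert (hxe : 0 <= x - e1) by lra.
    assert (hdiv : - (K * (x - e1)) / (2 * s2) <= - (K * (x - e1)) / 2).
    { unfold Rdiv. rewrite !Ropp_mult_distr_l_reverse. apply Ropp_le_contravar.
      apply Rmult_le_compat_l; [nra|]. apply Rinv_le_contravar; lra. }
    assert (hG2 : K2 * r2 - cos p2 + A2^(k-2) <= 0).
    { assert (hKr : K2 * r2 - K1 * r1 <= r2 - r1).
      { assert (r2 - r1 <= 0).
        { assert (- (K * (x - e1)) / 2 <= 0) by nra. lra. }
        assert (K2 * r2 - K1 * r1 <= K2 * (r2 - r1)) by nra. nra. }
      assert (hpw : A2^(k-2) - A1^(k-2) <= (K - 2) * (1/2) * ((x - e1) * s2)).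
      { assert (0 <= A2^(k-3)) by (apply pow_le; lra).
        assert (0 <= K - 2) by lra.
        assert ((K-2) * A2^(k-3) * (A2 - A1) <= (K - 2) * (1/2) * (A2 - A1)) by (apply Rmult_le_compat_r; [lra| apply Rmult_le_compat_l; lra]).
        assert ((K - 2) * (1/2) * (A2 - A1) <= (K - 2) * (1/2) * ((x - e1) * s2)) by (apply Rmult_le_compat_l; lra).
        lra. }
      assert ((K - 2) * (1/2) * ((x - e1) * s2) <= (K-2) * (1/2) * (x - e1)) by (apply Rmult_le_compat_l; [lra| nra]).
      nra. }
    assert (0 <= A2^3 * s2) by nra. nra.
Qed.

Lemma Efun_T1p t l m : 0 < t ->
  Efun t (-l - m*(1-t^2)) (-2*t*m) = (1/32) * t * T1p t l m.
Proof. intros. unfold Efun, T1p, qq. field. Qed.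

Lemma Zp_eq t l m k n : (1 <= k)%nat -> Cpow (aC t) (k-1) = sC t l m ->
  Zf t (S (k - 1 + n)) = Zp t l m (S n).
Proof.
  intros hk hs. unfold Zf, Zp. replace (S (k-1+n)) with ((k-1) + S n)%nat by lia.
  rewrite Cpow_add_r, hs. reflexivity.
Qed.

Lemma Wp_eq t l m k n : (1 <= k)%nat -> Cpow (aC t) (k-1) = sC t l m ->
  Wf t (k - 1 + n) = Wp t l m n.
Proof.
  intros hk hs. unfold Wf, Wp. rewrite Cpow_add_r, hs. reflexivity.
Qed.

Lemma Rr_eq t l m k n : (1 <= k)%nat -> Cpow (aC t) (k-1) = sC t l m ->
  Cpow (aC t) (k - 1 + n) = Rr t l m n.
Proof.
  intros hk hs. unfold Rr. rewrite Cpow_add_r, hs. reflexivity.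
Qed.

Lemma sin_lt_cos x : 0 < x -> x < PI/4 -> sin x < cos x.
Proof.
  intros h0 h1. pose proof PI_RGT_0.
  assert (sin x < sin (PI/4)) by (apply sin_increasing_1; lra).
  assert (cos (PI/4) < cos x) by (apply cos_decreasing_1; lra).
  rewrite sin_cos_PI4 in *. lra.
Qed.

Section Main5.
Variables (k : nat) (etak etak1 eta : R).
Hypothesis hk : (5 <= k)%nat.
Hypothesis H1 : is_eta_k k etak.
Hypothesis H2 : is_eta_k (S k) etak1.
Hypothesis H3 : etak1 <= eta < etak.

Lemma main5_facts : exists t l m, 0 < t /\ t < 1 /\ 0 < l /\ l <= 1/4 /\ 0 < m /\ T1p t l m <= 0 /\
   a_of eta = aC t /\ c_of eta = cc t /\ Cpow (aC t) (k-1) = sC t l m /\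
   (forall j, z_of eta j = Zf t (S j)) /\ (forall j, w_of eta j = Wf t j) /\ b0_of eta = B0 t.
Proof.
  destruct H1 as [[h1a h1b] h1c]. destruct H2 as [[h2a h2b] h2c].
  assert (hK : 5 <= INR k) by (replace 5 with (INR 5) by (simpl; ring); apply le_INR; lia).
  rewrite S_INR in h2a, h2b. replace (INR k + 1 - 1) with (INR k) in h2b by ring.
  pose proof PI_RGT_0 as hpi.
  assert (hb4 : PI / ((INR k) - 1) <= PI / 4).
  { apply Rmult_le_compat_l; [lra|]. apply Rinv_le_contravar; lra. }
  assert (he0 : 0 < eta).
  { assert (0 < PI / ((INR k)+1)) by (apply Rdiv_lt_0_compat; lra). lra. }
  assert (he4 : eta < PI/4) by lra.
  assert (he3 : eta < PI/3) by lra.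
  assert (hPhi : Phi (S k) eta <= 0).
  { apply (phi_neg k etak1 eta); [lia| rewrite S_INR; lra | lra | auto | lra | lra]. }
  pose proof (co_pos eta he0 he3) as hco.
  pose proof (si_pos eta he0 he3) as hsi.
  set (t := sin eta / cos eta).
  assert (ht0 : 0 < t) by (unfold t; apply Rdiv_lt_0_compat; lra).
  assert (ht1 : t < 1).
  { unfold t. apply Rmult_lt_reg_r with (cos eta); [lra|]. unfold Rdiv. rewrite Rmult_assoc, Rinv_l by lra.
    pose proof (sin_lt_cos eta he0 he4). lra. }
  set (s := Cpow (a_of eta) (k-1)).
  set (U := fst s). set (W := snd s).
  set (m := - W / (2*t)). set (l := - U - m * (1 - t^2)).
  assert (hs : s = (Aeta eta ^ (k-1) * cos (INR (k-1) * eta), - (Aeta eta ^ (k-1) * sin (INR (k-1) * eta)))) by (apply demoivre; lra).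
  assert (hk1 : INR (k-1) = (INR k) - 1) by (rewrite minus_INR by lia; simpl; ring).
  rewrite hk1 in hs.
  destruct (Aprops eta) as [hA [hA2 [hA1 _]]]; try lra.
  assert (hAk : 0 < Aeta eta ^ (k-1)) by (apply pow_lt; lra).
  assert (hW : W < 0).
  { unfold W. rewrite hs. simpl.
    assert (0 < sin (((INR k)-1) * eta)).
    { apply sin_gt_0. nra. apply Rmult_lt_compat_l with (r := (INR k) - 1) in h1b; [|lra].
      replace (((INR k)-1) * (PI / ((INR k) - 1))) with PI in h1b by (field; lra). nra. }
    nra. }
  assert (hm : 0 < m) by (unfold m; apply Rdiv_lt_0_compat; lra).
  assert (hUW : s = (U, W)) by (unfold U, W; apply surjective_pairing).
  assert (hUl : U = - l - m * (1 - t^2)) by (unfold l; ring).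
  assert (hWm : W = - 2 * t * m) by (unfold m; field; lra).
  assert (haeq : a_of eta = aC t) by (unfold t; apply a_eq; lra).
  assert (hl : 0 < l).
  { assert (ha2 : Cpow (a_of eta) (k+1) = Cmult s (Cpow (a_of eta) 2)) by (unfold s; rewrite <- Cpow_add_r; f_equal; lia).
    assert (himp : 0 < snd (Cpow (a_of eta) (k+1))).
    { rewrite (demoivre eta) by lra. cbn [snd]. rewrite plus_INR. simpl (INR 1).
      assert (hsn : sin ((INR k + 1) * eta) < 0).
      { set (y := (INR k + 1) * eta - PI).
        assert (hy0 : 0 < y).
        { unfold y. apply Rmult_lt_compat_l with (r := INR k + 1) in h2a; [|lra].
          replace ((INR k + 1) * (PI / (INR k + 1))) with PI in h2a by (field; lra).
          assert ((INR k+1)*etak1 <= (INR k + 1)*eta) by (apply Rmult_le_compat_l; lra). lra. }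
        assert (hy1 : y < PI).
        { unfold y. apply Rmult_lt_compat_l with (r := INR k + 1) in h1b; [|lra].
          replace ((INR k + 1) * (PI / (INR k - 1))) with (PI + 2 * PI / (INR k - 1)) in h1b by (field; lra).
          assert (hq : 2 / (INR k - 1) <= 1).
          { apply Rmult_le_reg_r with (INR k - 1); [lra|]. unfold Rdiv. rewrite Rmult_assoc, Rinv_l by lra. lra. }
          replace (2 * PI / (INR k - 1)) with (PI * (2 / (INR k - 1))) in h1b by (field; lra).
          nra. }
        replace ((INR k + 1) * eta) with (y + PI) by (unfold y; ring). rewrite neg_sin.
        assert (0 < sin y) by (apply sin_gt_0; lra). lra. }
      assert (0 < Aeta eta ^ (k+1)) by (apply pow_lt; lra). nra. }
    rewrite ha2, hUW, haeq in himp.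
    assert (E2 : snd (Cmult (U, W) (Cpow (aC t) 2)) = t * l / 2).
    { rewrite hUl, hWm. unfold Cpow, Cmult, aC, RtoC. cbn [fst snd]. field. }
    rewrite E2 in himp. nra. }
  assert (hl4 : l <= 1/4).
  { assert (hU : - U <= Aeta eta ^ (k-1)).
    { unfold U. rewrite hs. cbn [fst]. pose proof (COS_bound (((INR k) - 1) * eta)). nra. }
    assert (Aeta eta ^ (k-1) <= Aeta eta ^ 4) by (apply pow_le_small; lra || lia).
    assert (Aeta eta ^ 4 <= 1/4) by (replace (Aeta eta ^ 4) with ((Aeta eta ^ 2)^2) by ring; nra).
    assert (0 <= m * (1 - t^2)) by (apply Rmult_le_pos; nra).
    unfold l. lra. }
  assert (hT : T1p t l m <= 0).
  { pose proof (phi_E eta k he0 he3 ltac:(lia)) as hE. fold t in hE. fold s U W in hE.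
    rewrite hUl, hWm, Efun_T1p in hE by lra.
    assert (0 < Aeta eta ^ k) by (apply pow_lt; lra).
    assert (Aeta eta ^ k * Phi (S k) eta <= 0) by nra.
    nra. }
  exists t, l, m. repeat split; try lra.
  - exact haeq.
  - unfold t; apply c_eq; lra.
  - rewrite <- haeq. fold s. rewrite hUW, hUl, hWm. reflexivity.
  - intro j. unfold t; apply z_eq; lra.
  - intro j. unfold t; apply w_eq; lra.
  - unfold t; apply b0_eq; lra.
Qed.
Lemma main5 : forall j, conv_hull (Vk_set k eta) (z_of eta j) /\ conv_hull (Vk_set k eta) (w_of eta j).
Proof.
  destruct main5_facts as [t [l [m [ht0 [ht1 [hl [hl4 [hm [hT [ha [hc [hs [hz [hw hb]]]]]]]]]]]]]].
  set (P := conv_hull (Vk_set k eta)).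
  assert (Pz : forall j, (j <= k)%nat -> P (Zf t (S j))).
  { intros j hj. rewrite <- hz. apply hull_sub. right; left; exists j; auto. }
  assert (Pw : forall j, (1 <= j <= k)%nat -> P (Wf t j)).
  { intros j hj. rewrite <- hw. apply hull_sub. right; right; exists j; auto. }
  assert (Pb : P (B0 t)) by (rewrite <- hb; apply hull_sub; left; reflexivity).
  assert (EZ : forall n, Zp t l m (S n) = Zf t (S (k - 1 + n))) by (intro n; symmetry; apply Zp_eq; auto; lia).
  assert (EW : forall n, Wp t l m n = Wf t (k - 1 + n)) by (intro n; symmetry; apply Wp_eq; auto; lia).
  assert (PZ1 : P (Zp t l m 1)) by (rewrite EZ; apply Pz; lia).
  assert (PZ2 : P (Zp t l m 2)) by (rewrite EZ; apply Pz; lia).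
  assert (PW0 : P (Wp t l m 0)) by (rewrite EW; apply Pw; lia).
  assert (PW1 : P (Wp t l m 1)) by (rewrite EW; apply Pw; lia).
  assert (Pz0 : P (Zf t 1)) by (apply (Pz 0%nat); lia).
  assert (Pz1 : P (Zf t 2)) by (apply (Pz 1%nat); lia).
  assert (Pw1 : P (Wf t 1)) by (apply Pw; lia).
  assert (PZ3 : P (Zp t l m 3)) by (apply (tri_hull _ _ _ _ _ Pz0 PZ2 Pw1); apply (cert0 t l m); auto).
  assert (P0 : P (RtoC 0)) by (apply (tri_hull _ _ _ _ _ Pz0 PZ1 PZ3); apply (cert1 t l m); auto).
  assert (PW2 : P (Wp t l m 2)) by (apply (tri_hull _ _ _ _ _ Pw1 Pb PW1); apply (cert2 t l m); auto).
  assert (PWf0 : P (Wf t 0)) by (apply (tri_hull _ _ _ _ _ Pb P0 Pw1); apply (cert4 t l m); auto).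
  assert (P1 : P (RtoC 1)) by (apply (tri_hull _ _ _ _ _ PWf0 PW0 PW2); apply (cert3 t l m); auto).
  assert (PZ4 : P (Zp t l m 4)) by (apply (tri_hull _ _ _ _ _ P0 PZ3 PW2); apply (cert5 t l m); auto).
  assert (PW3 : P (Wp t l m 3)) by (apply (tri_hull _ _ _ _ _ P1 PW2 Pz1); apply (cert6 t l m); auto).
  destruct (tri_coef _ _ _ _ (cert7 t l m ht0 ht1 hl hl4 hm hT)) as [q1 [q2 [q3 [hq1 [hq2 [hq3 [hqs hrec]]]]]]].
  assert (ER : forall n, Cpow (a_of eta) (k - 1 + n) = Rr t l m n) by (intro n; rewrite ha; apply Rr_eq; auto; lia).
  apply (tails (Vk_set k eta) eta (k+3) 0 (k+2) 0 q2 q3 0); try lia; try lra; auto.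
  - replace (k+3)%nat with (k-1+4)%nat by lia. replace (k+2)%nat with (k-1+3)%nat by lia.
    rewrite !ER, hrec. simpl Cpow. destruct (Rr t l m 3) as [x y].
    unfold Cplus, Cmult, RtoC; cbn [fst snd]. f_equal; ring.
  - intros j hj. rewrite hz.
    destruct (Nat.le_gt_cases j k) as [hjk|hjk]; [apply Pz; lia|].
    destruct (Nat.eq_dec j (k+1)) as [->|hne].
    + replace (S (k+1)) with (S (k - 1 + 2)) by lia. rewrite <- EZ. exact PZ3.
    + replace j with (k+2)%nat by lia. replace (S (k+2)) with (S (k - 1 + 3)) by lia. rewrite <- EZ. exact PZ4.
  - intros j hj. rewrite hw.
    destruct (Nat.eq_dec j 0) as [->|hj0]; [exact PWf0|].
    destruct (Nat.le_gt_cases j k) as [hjk|hjk]; [apply Pw; lia|].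
    destruct (Nat.eq_dec j (k+1)) as [->|hne].
    + replace (k+1)%nat with (k - 1 + 2)%nat by lia. rewrite <- EW. exact PW2.
    + replace j with (k - 1 + 3)%nat by lia. rewrite <- EW. exact PW3.
Qed.
End Main5.

Lemma E4id t : Efun t (fst (Cpow (aC t) 3)) (snd (Cpow (aC t) 3)) = t * G4 t / 512.
Proof. unfold Efun, G4, qq, Cpow, Cmult, aC, RtoC. cbn [fst snd]. field. Qed.

Lemma E3id t : Efun t (fst (Cpow (aC t) 2)) (snd (Cpow (aC t) 2)) = t * (t^6 - t^4 - 13*t^2 + 21) / 64.
Proof. unfold Efun, qq, Cpow, Cmult, aC, RtoC. cbn [fst snd]. field. Qed.

Lemma tan_le x y : 0 < x -> x <= y -> y < PI/2 -> sin x / cos x <= sin y / cos y.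
Proof.
  intros h0 h1 h2. pose proof PI_RGT_0.
  assert (0 < cos y) by (apply cos_gt_0; lra).
  assert (cos y <= cos x) by (destruct (Req_dec x y) as [->|]; [lra| left; apply cos_decreasing_1; lra]).
  assert (sin x <= sin y) by (destruct (Req_dec x y) as [->|]; [lra| left; apply sin_increasing_1; lra]).
  assert (0 < sin x) by (apply sin_gt_0; lra).
  apply Rmult_le_reg_r with (cos x * cos y); [nra|].
  replace (sin x / cos x * (cos x * cos y)) with (sin x * cos y) by (field; lra).
  replace (sin y / cos y * (cos x * cos y)) with (sin y * cos x) by (field; lra). nra.
Qed.

Lemma tan_lt x y : 0 < x -> x < y -> y < PI/2 -> sin x / cos x < sin y / cos y.
Proof.
  intros h0 h1 h2. pose proof PI_RGT_0.
  assert (0 < cos y) by (apply cos_gt_0; lra).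
  assert (cos y < cos x) by (apply cos_decreasing_1; lra).
  assert (sin x < sin y) by (apply sin_increasing_1; lra).
  assert (0 < sin x) by (apply sin_gt_0; lra).
  apply Rmult_lt_reg_r with (cos x * cos y); [nra|].
  replace (sin x / cos x * (cos x * cos y)) with (sin x * cos y) by (field; lra).
  replace (sin y / cos y * (cos x * cos y)) with (sin y * cos x) by (field; lra). nra.
Qed.

Lemma cos_lt_sin x : PI/4 < x -> x < PI/2 -> cos x < sin x.
Proof.
  intros h0 h1. pose proof PI_RGT_0.
  assert (sin (PI/4) < sin x) by (apply sin_increasing_1; lra).
  assert (cos x < cos (PI/4)) by (apply cos_decreasing_1; lra).
  rewrite sin_cos_PI4 in *. lra.
Qed.

Definition g4 (v : R) := v^4 + 16*v^3 + 10*v^2 - 152*v + 109.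

Lemma G4_g4 t : G4 t = g4 (t*t).
Proof. unfold G4, g4. ring. Qed.

Lemma g4_low v : 0 < v -> v <= 4/5 -> 0 < g4 v.
Proof. intros. unfold g4. nra. Qed.

Lemma g4_neg v1 v : 4/5 <= v1 -> v1 < 1 -> g4 v1 = 0 -> v1 <= v -> (1+v)*(1+v) < 8 -> g4 v <= 0.
Proof.
  intros h1 h2 h3 h4 h5. unfold g4 in *.
  destruct (Rle_lt_dec v (14/10)) as [hv|hv].
  - assert (hH : v^3 + v^2*v1 + v*v1^2 + v1^3 + 16*(v^2 + v*v1 + v1^2) + 10*(v+v1) - 152 <= 0) by nra.
    assert (hid : v ^ 4 + 16 * v ^ 3 + 10 * v ^ 2 - 152 * v + 109 = (v - v1) * (v^3 + v^2*v1 + v*v1^2 + v1^3 + 16*(v^2 + v*v1 + v1^2) + 10*(v+v1) - 152) + (v1 ^ 4 + 16 * v1 ^ 3 + 10 * v1 ^ 2 - 152 * v1 + 109)) by ring.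
    rewrite hid, h3. nra.
  - assert (v < 183/100) by nra. nra.
Qed.

Section Main4.
Variables (etak etak1 eta : R).
Hypothesis H1 : is_eta_k 4 etak.
Hypothesis H2 : is_eta_k 5 etak1.
Hypothesis H3 : etak1 <= eta < etak.

Lemma main4_facts : exists t, 0 < t /\ 4/5 <= t*t /\ (1+t*t)*(1+t*t) < 8 /\ G4 t <= 0 /\
   a_of eta = aC t /\ (forall j, z_of eta j = Zf t (S j)) /\ (forall j, w_of eta j = Wf t j) /\ b0_of eta = B0 t.
Proof.
  destruct H1 as [[h1a h1b] h1c]. destruct H2 as [[h2a h2b] h2c].
  replace (INR 4) with 4 in h1a, h1b by (simpl; ring).
  replace (INR 5) with 5 in h2a, h2b by (simpl; ring).
  replace (4 - 1) with 3 in h1b by ring. replace (5 - 1) with 4 in h2b by ring.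
  pose proof PI_RGT_0 as hpi.
  assert (he0 : 0 < eta) by (assert (0 < PI/5) by lra; lra).
  assert (he3 : eta < PI/3) by lra.
  assert (hk0 : 0 < etak) by lra. assert (hk3 : etak < PI/3) by lra.
  assert (hj0 : 0 < etak1) by lra. assert (hj3 : etak1 < PI/3) by lra.
  set (t := sin eta / cos eta). set (tk := sin etak / cos etak). set (t1 := sin etak1 / cos etak1).
  assert (ht1t : t1 <= t) by (apply tan_le; lra).
  assert (httk : t < tk) by (apply tan_lt; lra).
  assert (ht10 : 0 < t1).
  { pose proof (co_pos etak1 hj0 hj3). pose proof (si_pos etak1 hj0 hj3). unfold t1. apply Rdiv_lt_0_compat; lra. }
  assert (ht11 : t1 < 1).
  { pose proof (co_pos etak1 hj0 hj3). unfold t1. apply Rmult_lt_reg_r with (cos etak1); [lra|].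
    unfold Rdiv. rewrite Rmult_assoc, Rinv_l by lra. pose proof (sin_lt_cos etak1 hj0 ltac:(lra)). lra. }
  assert (htk1 : 1 < tk).
  { pose proof (co_pos etak hk0 hk3). unfold tk. apply Rmult_lt_reg_r with (cos etak); [lra|].
    unfold Rdiv. rewrite Rmult_assoc, Rinv_l by lra. pose proof (cos_lt_sin etak ltac:(lra) ltac:(lra)). lra. }
  assert (htk3 : tk^2 < 3) by (unfold tk; apply t2_lt3; lra).
  assert (hg1 : G4 t1 = 0).
  { pose proof (phi_E etak1 4 hj0 hj3 ltac:(lia)) as hE. rewrite h2c, Rmult_0_r in hE.
    rewrite (a_eq etak1 hj0 hj3) in hE. fold t1 in hE. simpl (4-1)%nat in hE. rewrite E4id in hE.
    assert (t1 * G4 t1 = 0) by lra. destruct (Rmult_integral _ _ H) as [|]; lra. }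
  assert (hp4 : tk^6 - tk^4 - 13*tk^2 + 21 = 0).
  { pose proof (phi_E etak 3 hk0 hk3 ltac:(lia)) as hE. rewrite h1c, Rmult_0_r in hE.
    rewrite (a_eq etak hk0 hk3) in hE. fold tk in hE. simpl (3-1)%nat in hE. rewrite E3id in hE.
    assert (tk * (tk ^ 6 - tk ^ 4 - 13 * tk ^ 2 + 21) = 0) by lra.
    destruct (Rmult_integral _ _ H) as [|]; lra. }
  assert (hvk : (1 + tk*tk)*(1+tk*tk) = 8).
  { assert (hf : (tk*tk - 3) * ((1+tk*tk)*(1+tk*tk) - 8) = 0) by (rewrite <- hp4; ring).
    destruct (Rmult_integral _ _ hf) as [|]; nra. }
  assert (hv1 : 4/5 <= t1*t1).
  { destruct (Rle_lt_dec (t1*t1) (4/5)) as [hle|]; [|lra].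
    rewrite G4_g4 in hg1. pose proof (g4_low (t1*t1) ltac:(nra) hle). lra. }
  assert (htt : t*t < tk*tk) by nra.
  assert (hv8 : (1+t*t)*(1+t*t) < 8).
  { assert ((1+t*t)*(1+t*t) < (1+tk*tk)*(1+tk*tk)) by nra. lra. }
  assert (h11 : t1*t1 < 1) by nra. assert (h1t : t1*t1 <= t*t) by nra.
  assert (hG : G4 t <= 0).
  { rewrite G4_g4. rewrite G4_g4 in hg1. apply (g4_neg (t1*t1)); auto; nra. }
  exists t. repeat split; try nra.
  - unfold t; apply a_eq; lra.
  - intro j. unfold t; apply z_eq; lra.
  - intro j. unfold t; apply w_eq; lra.
  - unfold t; apply b0_eq; lra.
Qed.

Lemma main4 : forall j, conv_hull (Vk_set 4 eta) (z_of eta j) /\ conv_hull (Vk_set 4 eta) (w_of eta j).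
Proof.
  destruct main4_facts as [t [ht0 [hv0 [hv1 [hG [ha [hz [hw hb]]]]]]]].
  set (P := conv_hull (Vk_set 4 eta)).
  assert (Pz : forall j, (j <= 4)%nat -> P (Zf t (S j))).
  { intros j hj. rewrite <- hz. apply hull_sub. right; left; exists j; auto. }
  assert (Pw : forall j, (1 <= j <= 4)%nat -> P (Wf t j)).
  { intros j hj. rewrite <- hw. apply hull_sub. right; right; exists j; auto. }
  assert (Pb : P (B0 t)) by (rewrite <- hb; apply hull_sub; left; reflexivity).
  assert (Pz0 : P (Zf t 1)) by (apply (Pz 0%nat); lia).
  assert (Pz2 : P (Zf t 3)) by (apply (Pz 2%nat); lia).
  assert (Pz3 : P (Zf t 4)) by (apply (Pz 3%nat); lia).
  assert (Pz4 : P (Zf t 5)) by (apply (Pz 4%nat); lia).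
  assert (Pw1 : P (Wf t 1)) by (apply Pw; lia).
  assert (Pw3 : P (Wf t 3)) by (apply Pw; lia).
  assert (Pw4 : P (Wf t 4)) by (apply Pw; lia).
  assert (P0 : P (RtoC 0)) by (apply (tri_hull _ _ _ _ _ Pz2 Pz4 Pw3); apply (f0 t); auto).
  assert (P1 : P (RtoC 1)) by (apply (tri_hull _ _ _ _ _ Pz0 Pw1 Pw4); apply (f1 t); auto).
  assert (PW0 : P (Wf t 0)) by (apply (tri_hull _ _ _ _ _ Pz2 Pz3 Pw3); apply (f2 t); auto).
  assert (Pz5 : P (Zf t 6)) by (apply (tri_hull _ _ _ _ _ Pb Pz4 Pw1); apply (f3 t); auto).
  assert (Pw5 : P (Wf t 5)) by (apply (tri_hull _ _ _ _ _ Pb Pz2 Pw4); apply (f4 t); auto).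
  assert (Pz6 : P (Zf t 7)) by (apply (tri_hull _ _ _ _ _ Pz0 Pz4 Pw1); apply (f5 t); auto).
  assert (Pw6 : P (Wf t 6)) by (apply (tri_hull _ _ _ _ _ Pb Pw4 PW0); apply (f6 t); auto).
  destruct (tri_coef _ _ _ _ (f7 t ht0 hv0 hv1 hG)) as [q1 [q2 [q3 [hq1 [hq2 [hq3 [hqs hrec]]]]]]].
  apply (tails (Vk_set 4 eta) eta 7 0 2 6 q1 q2 q3); try lia; try lra; auto.
  - rewrite ha, hrec. reflexivity.
  - intros j hj. rewrite hz.
    destruct (Nat.le_gt_cases j 4) as [hjk|hjk]; [apply Pz; lia|].
    destruct (Nat.eq_dec j 5) as [->|hne]; [exact Pz5|].
    replace j with 6%nat by lia. exact Pz6.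
  - intros j hj. rewrite hw.
    destruct (Nat.eq_dec j 0) as [->|hj0]; [exact PW0|].
    destruct (Nat.le_gt_cases j 4) as [hjk|hjk]; [apply Pw; lia|].
    destruct (Nat.eq_dec j 5) as [->|hne]; [exact Pw5|].
    replace j with 6%nat by lia. exact Pw6.
Qed.
End Main4.

Theorem lemma6p6 (k : nat) (etak etak1 eta : R) :
  (4 <= k)%nat ->
  is_eta_k k etak -> is_eta_k (S k) etak1 ->
  etak1 <= eta < etak ->
  forall x : C, conv_hull (V_set eta) x <-> conv_hull (Vk_set k eta) x.
Proof.
  intros hk H1 H2 H3. apply reduce.
  destruct (Nat.eq_dec k 4) as [->|hne].
  - apply (main4 etak etak1); auto.
  - apply (main5 k etak etak1); auto; lia.
Qed.
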